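(* Assume the setting below. There exist $\varepsilon\in(0,1)$ and $C>1$ such that $\|\mathcal L_s^n\|_b\le C$ for all $s=\sigma+ib$ with $|\sigma|<\varepsilon$ and all $n\ge1$, where $\|\cdot\|_b$ is the operator norm on $C^\alpha_{\mathrm{loc}}(\Delta)$ induced by $\|\psi\|_b$.
   Context: Setting: $\alpha\in(0,1]$, $\Delta=[0,1]$, $\mathcal P$ countable Lebesgue-mod-0 partition into open intervals, $F$ full-branch and $C^{1+\alpha}$ on each element, $\mathcal H,\mathcal H_n$ inverse branches of $F,F^n$, with constants $C_0>0,\rho\in(0,1)$ such that $|h'|_\infty\le C_0\rho^n$ ($h\in\mathcal H_n$), $|\log|h'||_\alpha\le C_0$ ($h\in\mathcal H$); $r:\Delta\to(0,\infty)$ $C^1$ on elements of $\mathcal P$ with $|(r\circ h)'|_\infty\le C_0$ and $\sum_{h\in\mathcal H}e^{\varepsilon_0|r\circ h|_\infty}|h'|_\infty<\infty$ for some $\varepsilon_0>0$. $C^\alpha_{\mathrm{loc}}(\Delta)$: complex $\psi$ with $|\psi|_\infty+|\psi|_{\alpha,\mathrm{loc}}<\infty$, $|\psi|_{\alpha,\mathrm{loc}}=\sup_{h\in\mathcal H}\sup_{x\ne y}|\psi(hx)-\psi(hy)|/|x-y|^\alpha$; $\|\psi\|_b=\max\{|\psi|_\infty,|\psi|_{\alpha,\mathrm{loc}}/(1+|b|^\alpha)\}$. $P_s\psi=\sum_{h\in\mathcal H}e^{-sr\circ h}|h'|\psi\circ h$. For real $|\sigma|<\varepsilon$, $\lambda_\sigma>0$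 and $f_\sigma>0$ are the continuous families of simple leading eigenvalue and $\alpha$-Hölder eigenfunction of $P_\sigma$ ($\lambda_0=1$), with $\varepsilon$ small so that $1/2\le\lambda_\sigma\le2$, $f_0/2\le f_\sigma\le2f_0$, $|f_0|_\alpha/2\le|f_\sigma|_\alpha\le2|f_0|_\alpha$; $\mathcal L_s\psi=(\lambda_\sigma f_\sigma)^{-1}P_s(f_\sigma\psi)$ for $s=\sigma+ib$. *)

(* Defs.v *)
From Stdlib Require Import Reals Lra List.
From Coquelicot Require Import Coquelicot.
Open Scope R_scope.

(* The open interval (0,1): Delta = [0,1] taken mod 0. *)
Definition in01 (x : R) : Prop := 0 < x < 1.

Definition rpow (x a : R) : R :=
  match Rle_dec x 0 with left _ => 0 | right _ => Rpower x a end.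

Definition null_set (A : R -> Prop) : Prop :=
  forall eps, 0 < eps ->
  exists c d : nat -> R,
    (forall n, c n <= d n) /\
    (forall x, A x -> exists n, c n < x < d n) /\
    (forall N, sum_f_R0 (fun n => d n - c n) N <= eps).

Definition Cexp (z : C) : C :=
  (exp (fst z) * cos (snd z), exp (fst z) * sin (snd z)).

Definition csum (u : nat -> C) : C :=
  (Series (fun n => fst (u n)), Series (fun n => snd (u n))).

Definition branch (h : nat -> R -> R) (w : list nat) : R -> R :=
  fold_right (fun i g => fun x => h i (g x)) (fun x => x) w.

Definition Pop (I : nat -> bool) (h : nat -> R -> R) (r : R -> R)
    (s : C) (psi : R -> C) (x : R) : C :=
  csum (fun i => if I i then
      Cmult (Cmult (Cexp (Copp (Cmult s (RtoC (r (h i x))))))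
                   (RtoC (Rabs (Derive (h i) x))))
            (psi (h i x))
    else RtoC 0).

Definition Lop (I : nat -> bool) (h : nat -> R -> R) (r : R -> R)
    (lam : R -> R) (f : R -> R -> R) (s : C) (psi : R -> C) (x : R) : C :=
  Cmult (RtoC (/ (lam (fst s) * f (fst s) x)))
        (Pop I h r s (fun y => Cmult (RtoC (f (fst s) y)) (psi y)) x).

Definition bounded_set (E : R -> Prop) : Prop :=
  exists M, forall y, E y -> y <= M.

Definition sup_set (psi : R -> C) : R -> Prop :=
  fun y => exists x, in01 x /\ y = Cmod (psi x).

Definition holder_loc_set (I : nat -> bool) (h : nat -> R -> R) (alpha : R)
    (psi : R -> C) : R -> Prop :=
  fun y => exists i x z, I i = true /\ in01 x /\ in01 z /\ x <> z /\
    y = Cmod (Cminus (psi (h i x)) (psi (h i z))) / Rpower (Rabs (x - z)) alpha.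

Definition sup_norm (psi : R -> C) : R := real (Lub_Rbar (sup_set psi)).
Definition holder_loc (I : nat -> bool) (h : nat -> R -> R) (alpha : R)
    (psi : R -> C) : R := real (Lub_Rbar (holder_loc_set I h alpha psi)).

Definition in_Calpha (I : nat -> bool) (h : nat -> R -> R) (alpha : R)
    (psi : R -> C) : Prop :=
  bounded_set (sup_set psi) /\ bounded_set (holder_loc_set I h alpha psi).

Definition normb (I : nat -> bool) (h : nat -> R -> R) (alpha b : R)
    (psi : R -> C) : R :=
  Rmax (sup_norm psi) (holder_loc I h alpha psi / (1 + rpow (Rabs b) alpha)).

Definition holder_set (alpha : R) (g : R -> R) : R -> Prop :=
  fun y => exists x z, in01 x /\ in01 z /\ x <> z /\
    y = Rabs (g x - g z) / Rpower (Rabs (x - z)) alpha.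
Definition holder_semi (alpha : R) (g : R -> R) : R :=
  real (Lub_Rbar (holder_set alpha g)).

Definition Setting (alpha C0 rho eps0 : R) (I : nat -> bool) (a b : nat -> R)
    (F : R -> R) (h : nat -> R -> R) (r : R -> R) : Prop :=
  (0 < alpha <= 1) /\ 0 < C0 /\ (0 < rho < 1) /\ 0 < eps0 /\
  (* P: countable mod-0 partition of [0,1] into open intervals (a i, b i), i in I *)
  (forall i, I i = true -> 0 <= a i < b i /\ b i <= 1) /\
  (forall i j, I i = true -> I j = true -> i <> j -> b i <= a j \/ b j <= a i) /\
  null_set (fun x => 0 <= x <= 1 /\ forall i, I i = true -> ~ (a i < x < b i)) /\
  (forall i, I i = true ->
     (forall y, a i < y < b i -> ex_derive F y) /\
     exists K, forall y z, a i < y < b i -> a i < z < b i ->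
       Rabs (Derive F y - Derive F z) <= K * rpow (Rabs (y - z)) alpha) /\
  (forall i, I i = true ->
     (forall x, in01 x -> a i < h i x < b i /\ F (h i x) = x /\
                 ex_derive (h i) x /\ Derive (h i) x <> 0) /\
     (forall y, a i < y < b i -> in01 (F y) /\ h i (F y) = y)) /\
  (forall (n : nat) (w : list nat), (1 <= n)%nat -> length w = n ->
     (forall i, In i w -> I i = true) ->
     forall x, in01 x -> ex_derive (branch h w) x /\
       Rabs (Derive (branch h w) x) <= C0 * rho ^ n) /\
  (forall i, I i = true -> forall x y, in01 x -> in01 y -> x <> y ->
     Rabs (ln (Rabs (Derive (h i) x)) - ln (Rabs (Derive (h i) y)))
       / Rpower (Rabs (x - y)) alpha <= C0) /\
  (forall x, 0 <= x <= 1 -> 0 < r x) /\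
  (forall i, I i = true -> forall y, a i < y < b i ->
     ex_derive r y /\ continuous (Derive r) y) /\
  (forall i, I i = true -> forall x, in01 x ->
     ex_derive (fun t => r (h i t)) x /\
     Rabs (Derive (fun t => r (h i t)) x) <= C0) /\
  (* sum_{h in H} e^{eps0 |r o h|_infty} |h'|_infty < oo *)
  (exists Rb Db : nat -> R,
     (forall i, I i = true -> forall x, in01 x ->
        Rabs (r (h i x)) <= Rb i /\ Rabs (Derive (h i) x) <= Db i) /\
     ex_series (fun i => if I i then exp (eps0 * Rb i) * Db i else 0)).

(* lam_sigma, f_sigma: continuous families of simple leading eigenvalue and
   alpha-Hoelder eigenfunction of P_sigma for |sigma| < eps1, with the
   smallness normalisations of the setting. *)
Definition EigenFamily (alpha eps0 : R) (I : nat -> bool) (h : nat -> R -> R)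
    (r : R -> R) (lam : R -> R) (f : R -> R -> R) (eps1 : R) : Prop :=
  0 < eps1 /\ eps1 <= eps0 /\
  lam 0 = 1 /\
  (forall sigma, Rabs sigma < eps1 ->
     0 < lam sigma /\
     (forall x, in01 x -> 0 < f sigma x) /\
     bounded_set (holder_set alpha (f sigma)) /\
     (forall x, in01 x ->
        Pop I h r (RtoC sigma) (fun y => RtoC (f sigma y)) x
          = RtoC (lam sigma * f sigma x)) /\
     (forall (mu : C) (psi : R -> C), in_Calpha I h alpha psi ->
        (exists x, in01 x /\ psi x <> RtoC 0) ->
        (forall x, in01 x -> Pop I h r (RtoC sigma) psi x = Cmult mu (psi x)) ->
        Cmod mu <= lam sigma /\
        (mu = RtoC (lam sigma) ->
           exists c : C, forall x, in01 x -> psi x = Cmult c (RtoC (f sigma x)))) /\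
     (/ 2 <= lam sigma <= 2) /\
     (forall x, in01 x -> f 0 x / 2 <= f sigma x <= 2 * f 0 x) /\
     (holder_semi alpha (f 0) / 2 <= holder_semi alpha (f sigma)
        <= 2 * holder_semi alpha (f 0))) /\
  (forall sigma0, Rabs sigma0 < eps1 -> forall eta, 0 < eta ->
     exists delta, 0 < delta /\ forall sigma, Rabs sigma < eps1 ->
       Rabs (sigma - sigma0) < delta ->
       Rabs (lam sigma - lam sigma0) < eta /\
       (forall x, in01 x -> Rabs (f sigma x - f sigma0 x) < eta) /\
       holder_semi alpha (fun x => f sigma x - f sigma0 x) < eta).

Definition Lpow (I : nat -> bool) (h : nat -> R -> R) (r : R -> R)
    (lam : R -> R) (f : R -> R -> R) (s : C) (n : nat) (psi : R -> C) : R -> C :=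
  Nat.iter n (Lop I h r lam f s) psi.

(* Main.v *)
Require Import Defs.
From Stdlib Require Import Reals Lra Lia List ClassicalEpsilon.
From Coquelicot Require Import Coquelicot.
Open Scope R_scope.

Lemma rpow_pos_eq x a : 0 < x -> rpow x a = Rpower x a.
Proof. intros. unfold rpow. destruct (Rle_dec x 0); [lra|auto]. Qed.
Lemma rpow_0 a : rpow 0 a = 0.
Proof. unfold rpow. destruct (Rle_dec 0 0); [auto|lra]. Qed.
Lemma rpow_nonneg x a : 0 <= rpow x a.
Proof. unfold rpow. destruct (Rle_dec x 0); [lra|]. unfold Rpower. left; apply exp_pos. Qed.
Lemma rpow_mono x y a : 0 <= a -> 0 <= x <= y -> rpow x a <= rpow y a.
Proof.
  intros Ha [Hx Hxy]. destruct (Req_dec x 0) as [->|Hx0].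
  - rewrite rpow_0; apply rpow_nonneg.
  - rewrite !rpow_pos_eq by lra. apply Rle_Rpower_l; lra.
Qed.
Lemma rpow_mult x y a : 0 <= x -> 0 <= y -> rpow (x * y) a = rpow x a * rpow y a.
Proof.
  intros Hx Hy. destruct (Req_dec x 0) as [->|Hx0].
  { rewrite Rmult_0_l, rpow_0; ring. }
  destruct (Req_dec y 0) as [->|Hy0].
  { rewrite Rmult_0_r, rpow_0; ring. }
  rewrite !rpow_pos_eq by (try apply Rmult_lt_0_compat; lra).
  rewrite Rpower_mult_distr; lra.
Qed.
Lemma rpow_ge_id x a : 0 < a <= 1 -> 0 <= x <= 1 -> x <= rpow x a.
Proof.
  intros Ha Hx. destruct (Req_dec x 0) as [->|Hx0]. { rewrite rpow_0; lra. }
  rewrite rpow_pos_eq by lra.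
  destruct (Req_dec x 1) as [->|Hx1].
  { unfold Rpower. rewrite ln_1, Rmult_0_r, exp_0. lra. }
  rewrite <- (Rpower_1 x) at 1 by lra.
  unfold Rpower.
  assert (ln x < 0). { rewrite <- ln_1. apply ln_increasing; lra. }
  destruct (Req_dec a 1) as [->|]. lra.
  apply Rlt_le. apply exp_increasing. nra.
Qed.
Lemma rpow_le1 x a : 0 <= a -> 0 <= x <= 1 -> rpow x a <= 1.
Proof.
  intros Ha Hx. destruct (Req_dec x 0) as [->|Hx0]. { rewrite rpow_0; lra. }
  rewrite rpow_pos_eq by lra. unfold Rpower. rewrite <- exp_0.
  destruct (Req_dec x 1) as [->|Hx1]. { rewrite ln_1, Rmult_0_r. lra. }
  assert (ln x < 0). { rewrite <- ln_1. apply ln_increasing; lra. }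
  destruct (Req_dec a 0) as [->|]. rewrite Rmult_0_l; lra.
  apply Rlt_le, exp_increasing. nra.
Qed.
Lemma rpow_ge1 x a : 0 <= a -> 1 <= x -> 1 <= rpow x a.
Proof.
  intros Ha Hx. rewrite rpow_pos_eq by lra. unfold Rpower. rewrite <- exp_0.
  assert (0 <= ln x). { rewrite <- ln_1. destruct (Req_dec x 1) as [->|]; [lra|].
    left; apply ln_increasing; lra. }
  destruct (Req_dec (a * ln x) 0) as [E|E]. rewrite E; lra.
  left. apply exp_increasing. nra.
Qed.
Lemma min2_rpow v X a : 0 < a <= 1 -> 0 <= v -> v <= X -> v <= 2 -> v <= 2 * rpow X a.
Proof.
  intros Ha Hv HX H2. destruct (Rle_dec X 1).
  - pose proof (rpow_ge_id X a Ha ltac:(lra)). lra.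
  - pose proof (rpow_ge1 X a ltac:(lra) ltac:(lra)). lra.
Qed.
Lemma rpow_small eta a : 0 < a -> 0 < eta -> exists x, 0 < x /\ forall y, 0 <= y <= x -> rpow y a <= eta.
Proof.
  intros Ha He. exists (Rpower eta (/ a)). split. unfold Rpower; apply exp_pos.
  intros y Hy. eapply Rle_trans. apply rpow_mono. lra. exact Hy.
  rewrite rpow_pos_eq by (unfold Rpower; apply exp_pos). rewrite Rpower_mult.
  rewrite Rinv_l by lra. rewrite Rpower_1 by lra. lra.
Qed.

Lemma lip_gen (g : R -> R) K x z :
  (forall t, Rmin x z <= t <= Rmax x z -> ex_derive g t /\ Rabs (Derive g t) <= K) ->
  Rabs (g x - g z) <= K * Rabs (x - z).
Proof.
  intros H.
  destruct (MVT_gen g z x (Derive g)) as [c [Hc Heq]].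
  - intros t Ht. apply Derive_correct. apply H. unfold Rmin, Rmax in *.
    destruct (Rle_dec z x), (Rle_dec x z); lra.
  - intros t Ht. apply continuity_pt_filterlim. apply (@ex_derive_continuous R_AbsRing R_NormedModule). apply H.
    unfold Rmin, Rmax in *. destruct (Rle_dec z x), (Rle_dec x z); lra.
  - rewrite Heq, Rabs_mult. rewrite (Rabs_minus_sym x z) .
    apply Rmult_le_compat_r. apply Rabs_pos. apply H.
    unfold Rmin, Rmax in *. destruct (Rle_dec z x), (Rle_dec x z); lra.
Qed.
Lemma lip_low (g : R -> R) K x z :
  (forall t, Rmin x z <= t <= Rmax x z -> ex_derive g t /\ K <= Rabs (Derive g t)) ->
  K * Rabs (x - z) <= Rabs (g x - g z).
Proof.
  intros H.
  destruct (MVT_gen g z x (Derive g)) as [c [Hc Heq]].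
  - intros t Ht. apply Derive_correct. apply H. unfold Rmin, Rmax in *.
    destruct (Rle_dec z x), (Rle_dec x z); lra.
  - intros t Ht. apply continuity_pt_filterlim. apply (@ex_derive_continuous R_AbsRing R_NormedModule). apply H.
    unfold Rmin, Rmax in *. destruct (Rle_dec z x), (Rle_dec x z); lra.
  - rewrite Heq, Rabs_mult. rewrite (Rabs_minus_sym x z) .
    apply Rmult_le_compat_r. apply Rabs_pos. apply H.
    unfold Rmin, Rmax in *. destruct (Rle_dec z x), (Rle_dec x z); lra.
Qed.
Lemma between_in01 x z t : in01 x -> in01 z -> Rmin x z <= t <= Rmax x z -> in01 t.
Proof. unfold in01, Rmin, Rmax. intros. destruct (Rle_dec x z); lra. Qed.
Lemma lip_U (g : R -> R) K x z :
  (forall t, in01 t -> ex_derive g t /\ Rabs (Derive g t) <= K) -> in01 x -> in01 z ->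
  Rabs (g x - g z) <= K * Rabs (x - z).
Proof. intros H Hx Hz. apply lip_gen. intros t Ht. apply H. exact (between_in01 x z t Hx Hz Ht). Qed.
Lemma lipl_U (g : R -> R) K x z :
  (forall t, in01 t -> ex_derive g t /\ K <= Rabs (Derive g t)) -> in01 x -> in01 z ->
  K * Rabs (x - z) <= Rabs (g x - g z).
Proof. intros H Hx Hz. apply lip_low. intros t Ht. apply H. exact (between_in01 x z t Hx Hz Ht). Qed.

Lemma exp_m1_bound u : Rabs (exp u - 1) <= Rabs u * exp (Rabs u).
Proof.
  replace 1 with (exp 0) by apply exp_0.
  rewrite Rmult_comm.
  replace (Rabs u) with (Rabs (u - 0)) at 2 by (f_equal; ring).
  apply lip_gen. intros t Ht. split. eexists; apply is_derive_exp.
  rewrite (is_derive_unique _ _ _ (is_derive_exp t)).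
  rewrite Rabs_pos_eq by (left; apply exp_pos).
  destruct (Rle_lt_dec t (Rabs u)). 
  destruct r. left; apply exp_increasing; auto. rewrite H; lra.
  exfalso. unfold Rmin, Rmax in Ht. destruct (Rle_dec u 0); unfold Rabs in *;
   destruct (Rcase_abs u); lra.
Qed.
Lemma cos_lip a b : Rabs (cos a - cos b) <= Rabs (a - b).
Proof.
  rewrite <- (Rmult_1_l (Rabs (a - b))). apply lip_gen. intros t _. split.
  eexists; apply is_derive_cos.
  rewrite (is_derive_unique _ _ _ (is_derive_cos t)).
  rewrite Rabs_Ropp. apply Rabs_le. apply SIN_bound.
Qed.
Lemma sin_lip a b : Rabs (sin a - sin b) <= Rabs (a - b).
Proof.
  rewrite <- (Rmult_1_l (Rabs (a - b))). apply lip_gen. intros t _. split.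
  eexists; apply is_derive_sin.
  rewrite (is_derive_unique _ _ _ (is_derive_sin t)).
  apply Rabs_le. apply COS_bound.
Qed.

Lemma lub_le (E : R -> Prop) M : (forall y, E y -> y <= M) -> 0 <= M -> real (Lub_Rbar E) <= M.
Proof.
  intros HE HM. destruct (Lub_Rbar_correct E) as [Hub Hl].
  assert (Hm : Rbar_le (Lub_Rbar E) M). { apply Hl. intros y Hy. simpl. apply HE, Hy. }
  destruct (Lub_Rbar E); simpl in *; auto; contradiction.
Qed.
Lemma le_lub (E : R -> Prop) M y : (forall y, E y -> y <= M) -> E y -> y <= real (Lub_Rbar E).
Proof.
  intros HE Hy. destruct (Lub_Rbar_correct E) as [Hub Hl].
  assert (Hm : Rbar_le (Lub_Rbar E) M). { apply Hl. intros z Hz. simpl. apply HE, Hz. }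
  assert (H1 := Hub y Hy).
  destruct (Lub_Rbar E); simpl in *; auto; contradiction.
Qed.
Lemma bounded_le (E : R -> Prop) y : bounded_set E -> E y -> y <= real (Lub_Rbar E).
Proof. intros [M HM] Hy. eapply le_lub; eauto. Qed.

Lemma Series_zero : Series (fun _ => 0) = 0.
Proof. rewrite (Series_ext _ (fun n => 0 * 0)) by (intros; ring). rewrite Series_scal_l. ring. Qed.
Lemma Series_le_gen (a b : nat -> R) : (forall n, a n <= b n) -> ex_series a -> ex_series b ->
  Series a <= Series b.
Proof.
  intros H Ha Hb. cut (0 <= Series b - Series a). lra.
  rewrite <- Series_minus by auto. rewrite <- Series_zero.
  apply Series_le. intros n; specialize (H n); lra.
  apply (ex_series_minus b a); auto.
Qed.
Lemma ex_series_le_R (a b : nat -> R) : (forall n, Rabs (a n) <= b n) -> ex_series b -> ex_series a.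
Proof. intros. apply (ex_series_le a b); auto. Qed.
Lemma ex_series_zero : ex_series (fun _ => 0).
Proof.
  apply (ex_series_ext (fun n => scal 0 ((1/2) ^ n))). intros n. unfold scal; simpl.
  unfold mult; simpl. ring.
  apply (@ex_series_scal_l R_AbsRing R_NormedModule). apply ex_series_geom. rewrite Rabs_pos_eq; lra.
Qed.

Definition cdom (u : nat -> C) := exists b : nat -> R, (forall n, Cmod (u n) <= b n) /\ ex_series b.

Lemma cdom_fst u : cdom u -> ex_series (fun n => fst (u n)).
Proof. intros [b [Hb Hs]]. apply (ex_series_le_R _ b); auto. intros n.
  eapply Rle_trans; [|apply Hb]. pose proof (Rmax_Cmod (u n)). pose proof (Rmax_l (Rabs (fst (u n))) (Rabs (snd (u n)))). lra. Qed.
Lemma cdom_snd u : cdom u -> ex_series (fun n => snd (u n)).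
Proof. intros [b [Hb Hs]]. apply (ex_series_le_R _ b); auto. intros n.
  eapply Rle_trans; [|apply Hb]. pose proof (Rmax_Cmod (u n)). pose proof (Rmax_r (Rabs (fst (u n))) (Rabs (snd (u n)))). lra. Qed.

Lemma cs_ineq x y c d : c ^ 2 + d ^ 2 = 1 -> x * c + y * d <= sqrt (x ^ 2 + y ^ 2).
Proof.
  intros H. destruct (Rle_dec (x * c + y * d) 0). { pose proof (sqrt_pos (x^2+y^2)); lra. }
  rewrite <- (sqrt_pow2 (x * c + y * d)) by lra. apply sqrt_le_1_alt.
  assert (0 <= (x * d - y * c) ^ 2) by apply pow2_ge_0.
  assert (E : (x^2+y^2)*(c^2+d^2) = (x * c + y * d)^2 + (x * d - y * c) ^ 2) by ring.
  rewrite H, Rmult_1_r in E. lra.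
Qed.

Lemma csum_bound (u : nat -> C) (b : nat -> R) :
  (forall n, Cmod (u n) <= b n) -> ex_series b -> Cmod (csum u) <= Series b.
Proof.
  intros Hb Hs. assert (Hd : cdom u) by (exists b; auto).
  pose proof (cdom_fst u Hd) as H1. pose proof (cdom_snd u Hd) as H2.
  unfold csum. set (A := Series (fun n => fst (u n))). set (B := Series (fun n => snd (u n))).
  destruct (Req_dec (Cmod (A, B)) 0) as [E|E].
  { rewrite E. rewrite <- Series_zero. apply Series_le_gen; auto.
    intros n; eapply Rle_trans; [apply Cmod_ge_0|apply Hb].
    apply ex_series_zero. }
  assert (Hp : 0 < Cmod (A,B)) by (pose proof (Cmod_ge_0 (A,B)); lra).
  set (c := A / Cmod (A,B)). set (d := B / Cmod (A,B)).
  assert (Hcd : c ^ 2 + d ^ 2 = 1).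
  { unfold c, d. assert (Cmod (A,B) ^ 2 = A ^ 2 + B ^ 2).
    { unfold Cmod. simpl fst; simpl snd. rewrite pow2_sqrt. ring. nra. }
    field_simplify; [|lra]. rewrite <- H. field. lra. }
  assert (Cmod (A,B) = A * c + B * d).
  { unfold c, d. assert (Cmod (A,B) ^ 2 = A ^ 2 + B ^ 2).
    { unfold Cmod. simpl fst; simpl snd. rewrite pow2_sqrt. ring. nra. }
    field_simplify; [|lra]. rewrite <- H. field. lra. }
  rewrite H. unfold A, B. rewrite <- Series_scal_r, <- Series_scal_r.
  rewrite <- Series_plus.
  2: apply ex_series_scal_r; auto.
  2: apply ex_series_scal_r; auto.
  apply Series_le_gen; auto.
  - intros n. eapply Rle_trans; [|apply Hb]. unfold Cmod. apply cs_ineq; auto.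
  - apply (ex_series_plus (fun n => fst (u n) * c) (fun n => snd (u n) * d));
      apply ex_series_scal_r; auto.
Qed.


Lemma ex_series_sl (c : R) (a : nat -> R) : ex_series a -> ex_series (fun n => c * a n).
Proof. intros H. apply (@ex_series_scal_l R_AbsRing R_NormedModule c a H). Qed.
Lemma cdom_plus u v : cdom u -> cdom v -> cdom (fun n => (u n + v n)%C).
Proof.
  intros [b1 [H1 S1]] [b2 [H2 S2]]. exists (fun n => b1 n + b2 n). split.
  intros n. eapply Rle_trans. apply Cmod_triangle. specialize (H1 n); specialize (H2 n); lra.
  apply (ex_series_plus b1 b2); auto.
Qed.
Lemma cdom_scal c u : cdom u -> cdom (fun n => (c * u n)%C).
Proof.
  intros [b1 [H1 S1]]. exists (fun n => Cmod c * b1 n). split.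
  intros n. rewrite Cmod_mult. apply Rmult_le_compat_l. apply Cmod_ge_0. auto.
  apply ex_series_sl; auto.
Qed.
Lemma cdom_ext u v : (forall n, u n = v n) -> cdom u -> cdom v.
Proof. intros E [b [H S]]. exists b. split; auto. intros n; rewrite <- E; auto. Qed.
Lemma csum_ext u v : (forall n, u n = v n) -> csum u = csum v.
Proof. intros E. unfold csum. f_equal; apply Series_ext; intros n; rewrite E; auto. Qed.
Lemma csum_plus u v : cdom u -> cdom v -> csum (fun n => (u n + v n)%C) = (csum u + csum v)%C.
Proof.
  intros Hu Hv. unfold csum. simpl.
  rewrite !Series_plus; auto using cdom_fst, cdom_snd.
Qed.
Lemma csum_scal c u : cdom u -> csum (fun n => (c * u n)%C) = (c * csum u)%C.
Proof.
  intros Hu. unfold csum. simpl. pose proof (cdom_fst u Hu). pose proof (cdom_snd u Hu).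
  rewrite Series_minus, Series_plus by (apply ex_series_sl; auto).
  rewrite !Series_scal_l. reflexivity.
Qed.
Lemma csum_minus u v : cdom u -> cdom v -> csum (fun n => (u n - v n)%C) = (csum u - csum v)%C.
Proof.
  intros Hu Hv. unfold Cminus.
  rewrite (csum_ext _ (fun n => (u n + (-1) * v n)%C)) by (intros; ring).
  rewrite csum_plus; auto. rewrite csum_scal; auto. ring. apply cdom_scal; auto.
Qed.

Lemma sum_f_nonneg_ge (a : nat -> R) j : (forall n, 0 <= a n) -> a j <= sum_f_R0 a j.
Proof.
  intros H. destruct j. simpl; lra. simpl. pose proof (cond_pos_sum a j H). lra.
Qed.
Lemma term_le_Series (a : nat -> R) j : (forall n, 0 <= a n) -> ex_series a -> a j <= Series a.
Proof.
  intros H Ha. rewrite (Series_incr_n a (S j)) by (auto with arith). simpl pred.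
  pose proof (sum_f_nonneg_ge a j H).
  assert (0 <= Series (fun k => a (S j + k)%nat)).
  { rewrite <- Series_zero. apply Series_le_gen; auto. apply ex_series_zero.
    apply (ex_series_incr_n a (S j)); auto. }
  lra.
Qed.
Lemma sum_f_single (a : nat -> R) j : (forall k, k <> j -> a k = 0) -> sum_f_R0 a j = a j.
Proof.
  intros H. destruct j. simpl; auto. simpl.
  assert (sum_f_R0 a j = 0).
  { clear -H. assert (forall m, (m <= j)%nat -> sum_f_R0 a m = 0).
    { induction m; intros Hm. simpl. apply H. lia. simpl. rewrite IHm by lia. rewrite H by lia. ring. }
    apply H0; lia. }
  rewrite H0; ring.
Qed.
Lemma Series_single (a : nat -> R) j : (forall k, k <> j -> a k = 0) -> Series a = a j.
Proof.
  intros H.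
  assert (Ht : forall k, a (S j + k)%nat = 0) by (intros k; apply H; lia).
  assert (Ha : ex_series a).
  { apply (ex_series_incr_n a (S j)). apply (ex_series_ext (fun _ => 0)). intros k; rewrite Ht; auto.
    apply ex_series_zero. }
  rewrite (Series_incr_n a (S j)) by (auto with arith). simpl pred.
  rewrite (Series_ext _ (fun _ => 0)) by auto. rewrite Series_zero, sum_f_single; auto. ring.
Qed.
Lemma pow_le_mono_r (x : R) m n : 0 <= x <= 1 -> (m <= n)%nat -> x ^ n <= x ^ m.
Proof.
  intros Hx Hmn. replace n with (m + (n - m))%nat by lia. rewrite pow_add.
  assert (x ^ (n - m) <= 1) by (rewrite <- (pow1 (n - m)); apply pow_incr; lra).
  assert (0 <= x ^ m) by (apply pow_le; lra). nra.
Qed.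

Section Main.
Variables (alpha C0 rho eps0 : R) (I : nat -> bool) (a b : nat -> R)
  (F : R -> R) (h : nat -> R -> R) (r : R -> R)
  (lam : R -> R) (f : R -> R -> R) (eps1 : R).
Hypothesis HS : Setting alpha C0 rho eps0 I a b F h r.
Hypothesis HE : EigenFamily alpha eps0 I h r lam f eps1.

Ltac dS := destruct HS as (Ha & HC0 & Hrho & Heps0 & Hab & Hdisj & Hnull & HF & Hfull & Hbr & Hlog & Hrpos & Hr1 & Hrh & Hsum).

Lemma alpha_b : 0 < alpha <= 1. Proof. dS; auto. Qed.
Lemma C0_pos : 0 < C0. Proof. dS; auto. Qed.
Lemma rho_b : 0 < rho < 1. Proof. dS; auto. Qed.
Lemma eps1_b : 0 < eps1 /\ eps1 <= eps0.
Proof. destruct HE as (? & ? & _); auto. Qed.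

Lemma h_in j x : I j = true -> in01 x -> in01 (h j x) /\ a j < h j x < b j.
Proof. dS. intros Hj Hx. destruct (Hfull j Hj) as [H1 _]. destruct (H1 x Hx) as [H2 _].
  destruct (Hab j Hj). unfold in01; repeat split; lra. Qed.

Lemma h_der j x : I j = true -> in01 x -> ex_derive (h j) x /\ 0 < Rabs (Derive (h j) x).
Proof. dS. intros Hj Hx. destruct (Hfull j Hj) as [H1 _]. destruct (H1 x Hx) as (_ & _ & H3 & H4).
  split; auto. apply Rabs_pos_lt; auto. Qed.

Lemma h_dbound j x : I j = true -> in01 x -> Rabs (Derive (h j) x) <= C0 * rho.
Proof. dS. intros Hj Hx. destruct (Hbr 1%nat (j :: nil) (le_n 1) eq_refl) with x as [_ H]; auto.
  intros i [<-|[]]; auto. simpl in H. rewrite Rmult_1_r in H. exact H. Qed.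

Lemma h_lip j x z : I j = true -> in01 x -> in01 z -> Rabs (h j x - h j z) <= C0 * Rabs (x - z).
Proof.
  intros Hj Hx Hz. eapply Rle_trans. apply (lip_U (h j) (C0 * rho)); auto.
  intros t Ht; split; [apply h_der; auto| apply h_dbound; auto].
  pose proof rho_b; pose proof C0_pos. apply Rmult_le_compat_r. apply Rabs_pos. nra.
Qed.

Lemma logD j x y : I j = true -> in01 x -> in01 y ->
  Rabs (ln (Rabs (Derive (h j) x)) - ln (Rabs (Derive (h j) y))) <= C0 * rpow (Rabs (x - y)) alpha.
Proof.
  dS. intros Hj Hx Hy. destruct (Req_dec x y) as [->|Hxy].
  { rewrite Rminus_diag, Rabs_R0. pose proof (rpow_nonneg (Rabs (y - y)) alpha). nra. }
  pose proof (Hlog j Hj x y Hx Hy Hxy) as H.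
  assert (Hp : 0 < Rpower (Rabs (x - y)) alpha) by (unfold Rpower; apply exp_pos).
  rewrite rpow_pos_eq by (apply Rabs_pos_lt; lra).
  apply Rmult_le_compat_r with (r := Rpower (Rabs (x - y)) alpha) in H; [|lra].
  unfold Rdiv in H. rewrite Rmult_assoc, Rinv_l, Rmult_1_r in H by lra. exact H.
Qed.

Lemma rh_lip j x z : I j = true -> in01 x -> in01 z -> Rabs (r (h j x) - r (h j z)) <= C0 * Rabs (x - z).
Proof.
  dS. intros Hj Hx Hz. apply (lip_U (fun t => r (h j t)) C0); auto.
Qed.

Lemma beta_ex : { beta : nat -> R | ex_series beta /\ (forall j, 0 <= beta j) /\
  forall j x sigma, I j = true -> in01 x -> Rabs sigma <= eps0 ->
    exp (- (sigma * r (h j x))) * Rabs (Derive (h j) x) <= beta j }.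
Proof.
  apply constructive_indefinite_description.
  dS. destruct Hsum as (Rb & Db & HRD & Hser).
  exists (fun i => if I i then exp (eps0 * Rb i) * Db i else 0). split; [exact Hser|split].
  - intros j. destruct (I j) eqn:Ej; [|lra].
    destruct (HRD j Ej (1/2)) as [_ H2]. unfold in01; lra.
    pose proof (Rabs_pos (Derive (h j) (1/2))). pose proof (exp_pos (eps0 * Rb j)). nra.
  - intros j x sigma Hj Hx Hs. rewrite Hj. destruct (HRD j Hj x Hx) as [H1 H2].
    apply Rmult_le_compat; try (left; apply exp_pos); try apply Rabs_pos; auto.
    destruct (Rle_lt_dec (- (sigma * r (h j x))) (eps0 * Rb j)) as [Hl|Hl].
    + destruct Hl as [Hl|Hl]; [left; apply exp_increasing; auto| rewrite Hl; lra].
    + exfalso. assert (Rabs (sigma * r (h j x)) <= eps0 * Rb j).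
      { rewrite Rabs_mult. apply Rmult_le_compat; auto using Rabs_pos. }
      pose proof (Rle_abs (- (sigma * r (h j x)))). rewrite Rabs_Ropp in H0. lra.
Qed.
Definition beta := proj1_sig beta_ex.
Lemma beta_ser : ex_series beta. Proof. exact (proj1 (proj2_sig beta_ex)). Qed.
Lemma beta_nn j : 0 <= beta j. Proof. exact (proj1 (proj2 (proj2_sig beta_ex)) j). Qed.
Lemma beta_bd j x sigma : I j = true -> in01 x -> Rabs sigma <= eps0 ->
    exp (- (sigma * r (h j x))) * Rabs (Derive (h j) x) <= beta j.
Proof. exact (proj2 (proj2 (proj2_sig beta_ex)) j x sigma). Qed.

Ltac dE := destruct HE as (He1 & He10 & Hlam0 & Hsig & Hcont).

Lemma lam_b s : Rabs s < eps1 -> 0 < lam s /\ / 2 <= lam s <= 2.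
Proof. dE. intros Hs. destruct (Hsig s Hs) as (H1 & _ & _ & _ & _ & H2 & _). auto. Qed.
Lemma f_pos s x : Rabs s < eps1 -> in01 x -> 0 < f s x.
Proof. dE. intros Hs Hx. destruct (Hsig s Hs) as (_ & H1 & _). auto. Qed.
Lemma f_cmp s x : Rabs s < eps1 -> in01 x -> f 0 x / 2 <= f s x <= 2 * f 0 x.
Proof. dE. intros Hs Hx. destruct (Hsig s Hs) as (_ & _ & _ & _ & _ & _ & H & _). auto. Qed.
Lemma f_eig s x : Rabs s < eps1 -> in01 x ->
  Pop I h r (RtoC s) (fun y => RtoC (f s y)) x = RtoC (lam s * f s x).
Proof. dE. intros Hs Hx. destruct (Hsig s Hs) as (_ & _ & _ & H & _). auto. Qed.
Lemma eps1_0 : Rabs 0 < eps1.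
Proof. rewrite Rabs_R0. apply eps1_b. Qed.

Definition H0 := holder_semi alpha (f 0).
Definition Hf := 2 * H0.

Lemma third_in : in01 (1/3). Proof. unfold in01; lra. Qed.
Lemma twothird_in : in01 (2/3). Proof. unfold in01; lra. Qed.
Lemma half_in : in01 (1/2). Proof. unfold in01; lra. Qed.

Lemma Rpower_pos x y : 0 < Rpower x y. Proof. unfold Rpower; apply exp_pos. Qed.

Lemma hol_elem s x z : Rabs s < eps1 -> in01 x -> in01 z -> x <> z ->
  Rabs (f s x - f s z) / Rpower (Rabs (x - z)) alpha <= holder_semi alpha (f s).
Proof.
  dE. intros Hs Hx Hz Hxz. destruct (Hsig s Hs) as (_ & _ & Hb & _).
  apply bounded_le; auto. exists x, z; split; [|split; [|split]]; auto.
Qed.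
Lemma H0_nn : 0 <= H0.
Proof.
  unfold H0. eapply Rle_trans; [|apply (hol_elem 0 (1/3) (2/3)); auto using eps1_0, third_in, twothird_in; lra].
  apply Rmult_le_pos. apply Rabs_pos. left; apply Rinv_0_lt_compat, Rpower_pos.
Qed.
Lemma f_hol s x z : Rabs s < eps1 -> in01 x -> in01 z ->
  Rabs (f s x - f s z) <= Hf * rpow (Rabs (x - z)) alpha.
Proof.
  intros Hs Hx Hz. destruct (Req_dec x z) as [->|Hxz].
  { rewrite Rminus_diag, Rabs_R0. pose proof H0_nn. pose proof (rpow_nonneg (Rabs (z - z)) alpha). unfold Hf. nra. }
  assert (Hhs : holder_semi alpha (f s) <= Hf).
  { dE. destruct (Hsig s Hs) as (_ & _ & _ & _ & _ & _ & _ & H). unfold Hf, H0. lra. }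
  pose proof (hol_elem s x z Hs Hx Hz Hxz) as H.
  rewrite rpow_pos_eq by (apply Rabs_pos_lt; lra).
  pose proof (Rpower_pos (Rabs (x - z)) alpha).
  apply Rmult_le_compat_r with (r := Rpower (Rabs (x - z)) alpha) in H; [|lra].
  unfold Rdiv in H. rewrite Rmult_assoc, Rinv_l, Rmult_1_r in H by lra. nra.
Qed.

Definition Sf := 2 * (f 0 (1/2) + Hf).
Lemma f_up s x : Rabs s < eps1 -> in01 x -> f s x <= Sf.
Proof.
  intros Hs Hx. pose proof (f_cmp s x Hs Hx).
  pose proof (f_hol 0 x (1/2) eps1_0 Hx half_in).
  pose proof (rpow_le1 (Rabs (x - 1/2)) alpha). unfold in01 in Hx.
  assert (rpow (Rabs (x - 1 / 2)) alpha <= 1). { apply H2. pose proof alpha_b; lra. split. apply Rabs_pos.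
    apply Rabs_le; lra. }
  pose proof (Rle_abs (f 0 x - f 0 (1/2))). pose proof H0_nn as HH.
  assert (Hf * rpow (Rabs (x - 1 / 2)) alpha <= Hf). { unfold Hf. pose proof (rpow_nonneg (Rabs (x - 1 / 2)) alpha). nra. }
  unfold Sf. lra.
Qed.
Lemma Sf_pos : 0 < Sf.
Proof. pose proof (f_pos 0 (1/2) eps1_0 half_in). pose proof H0_nn. unfold Sf, Hf; lra. Qed.

Definition w s y j := if I j then exp (- (s * r (h j y))) * Rabs (Derive (h j) y) * f s (h j y) else 0.

Lemma w_nn s y j : Rabs s < eps1 -> in01 y -> 0 <= w s y j.
Proof.
  intros Hs Hy. unfold w. destruct (I j) eqn:Ej; [|lra].
  pose proof (f_pos s (h j y) Hs (proj1 (h_in j y Ej Hy))). pose proof (exp_pos (- (s * r (h j y)))).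
  pose proof (Rabs_pos (Derive (h j) y)). apply Rmult_le_pos; [apply Rmult_le_pos|]; lra.
Qed.
Lemma w_ser s y : Rabs s < eps1 -> in01 y -> ex_series (w s y).
Proof.
  intros Hs Hy. apply (ex_series_le_R _ (fun j => beta j * Sf)).
  - intros j. rewrite Rabs_pos_eq by (apply w_nn; auto). unfold w. destruct (I j) eqn:Ej.
    + pose proof (f_pos s (h j y) Hs (proj1 (h_in j y Ej Hy))). pose proof (f_up s (h j y) Hs (proj1 (h_in j y Ej Hy))).
      apply Rmult_le_compat; auto. apply Rmult_le_pos. left; apply exp_pos. apply Rabs_pos. lra.
      apply beta_bd; auto. pose proof eps1_b; lra.
    + pose proof (beta_nn j); pose proof Sf_pos; nra.
  - apply ex_series_scal_r. apply beta_ser.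
Qed.
Lemma w_sum s y : Rabs s < eps1 -> in01 y -> Series (w s y) = lam s * f s y.
Proof.
  intros Hs Hy. pose proof (f_eig s y Hs Hy) as E. apply (f_equal fst) in E. simpl in E.
  rewrite <- E. unfold Pop, csum. simpl. apply Series_ext. intros j. unfold w.
  destruct (I j); simpl; [|auto].
  unfold Cexp; simpl. replace (- (s * 0 + 0 * r (h j y))) with 0 by ring.
  replace (- (s * r (h j y) - 0 * 0)) with (- (s * r (h j y))) by ring.
  rewrite cos_0, sin_0. ring.
Qed.

Definition ee (s : C) j y := Cexp (Copp (Cmult s (RtoC (r (h j y))))).
Lemma ee_eq s j y : ee s j y =
  (exp (- (fst s * r (h j y))) * cos (- (snd s * r (h j y))),
   exp (- (fst s * r (h j y))) * sin (- (snd s * r (h j y)))).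
Proof.
  destruct s as [s1 s2]. unfold ee, Cexp; simpl.
  replace (- (s1 * r (h j y) - s2 * 0)) with (- (s1 * r (h j y))) by ring.
  replace (- (s1 * 0 + s2 * r (h j y))) with (- (s2 * r (h j y))) by ring. auto.
Qed.
Lemma Cmod_pair_e E t : 0 <= E -> Cmod (E * cos t, E * sin t) = E.
Proof.
  intros HEE. unfold Cmod; cbn [fst snd]. pose proof (sin2_cos2 t) as Hs. unfold Rsqr in Hs.
  replace ((E * cos t) ^ 2 + (E * sin t) ^ 2) with (E ^ 2 * (sin t * sin t + cos t * cos t)) by ring.
  rewrite Hs, Rmult_1_r. apply sqrt_pow2; auto.
Qed.
Lemma ee_mod s j y : Cmod (ee s j y) = exp (- (fst s * r (h j y))).
Proof. rewrite ee_eq. apply Cmod_pair_e. left; apply exp_pos. Qed.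

Definition Wt (s : C) j y : C :=
  (RtoC (/ (lam (fst s) * f (fst s) y)) * ee s j y * RtoC (Rabs (Derive (h j) y) * f (fst s) (h j y)))%C.

Lemma Wt_mod s j y : Rabs (fst s) < eps1 -> in01 y -> I j = true ->
  Cmod (Wt s j y) = w (fst s) y j / (lam (fst s) * f (fst s) y).
Proof.
  intros Hs Hy Hj. unfold Wt, w. rewrite Hj. rewrite !Cmod_mult, !Cmod_R, ee_mod.
  pose proof (lam_b _ Hs). pose proof (f_pos _ y Hs Hy).
  pose proof (f_pos _ (h j y) Hs (proj1 (h_in j y Hj Hy))).
  rewrite Rabs_pos_eq by (left; apply Rinv_0_lt_compat, Rmult_lt_0_compat; lra).
  rewrite (Rabs_pos_eq (_ * _)) by (apply Rmult_le_pos; [apply Rabs_pos|lra]).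
  unfold Rdiv. ring.
Qed.

Lemma cdom_w s y (u : nat -> C) K : Rabs s < eps1 -> in01 y ->
  (forall j, Cmod (u j) <= w s y j * K) -> cdom u.
Proof. intros Hs Hy H. exists (fun j => w s y j * K). split; auto. apply ex_series_scal_r, w_ser; auto. Qed.

Lemma Lop_eq s phi M y : Rabs (fst s) < eps1 -> in01 y -> (forall x, in01 x -> Cmod (phi x) <= M) ->
  Lop I h r lam f s phi y = csum (fun j => if I j then (Wt s j y * phi (h j y))%C else RtoC 0).
Proof.
  intros Hs Hy HM. unfold Lop, Pop. rewrite <- csum_scal.
  - apply csum_ext. intros j. destruct (I j) eqn:Ej.
    + unfold Wt, ee. unfold RtoC. apply injective_projections; simpl; ring.
    + unfold RtoC; apply injective_projections; simpl; ring.
  - apply (cdom_w (fst s) y _ M Hs Hy). intros j. unfold w. destruct (I j) eqn:Ej.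
    + rewrite !Cmod_mult, !Cmod_R. fold (ee s j y). rewrite ee_mod.
      pose proof (f_pos _ (h j y) Hs (proj1 (h_in j y Ej Hy))).
      rewrite (Rabs_pos_eq (f _ _)) by lra. rewrite Rabs_Rabsolu.
      assert (Cmod (phi (h j y)) <= M) by (apply HM, h_in; auto).
      set (P := exp (- (fst s * r (h j y))) * Rabs (Derive (h j) y)).
      assert (0 <= P) by (apply Rmult_le_pos; [left; apply exp_pos|apply Rabs_pos]).
      replace (P * (f (fst s) (h j y) * Cmod (phi (h j y)))) with ((P * f (fst s) (h j y)) * Cmod (phi (h j y))) by ring.
      apply Rmult_le_compat_l; auto. apply Rmult_le_pos; lra.
    + rewrite Cmod_R, Rabs_R0. lra.
Qed.

Lemma M_nn (phi : R -> C) M : (forall x, in01 x -> Cmod (phi x) <= M) -> 0 <= M.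
Proof. intros H. pose proof (H (1/2) half_in). pose proof (Cmod_ge_0 (phi (1/2))). lra. Qed.

Lemma Lop_sup s phi M y : Rabs (fst s) < eps1 -> in01 y -> (forall x, in01 x -> Cmod (phi x) <= M) ->
  Cmod (Lop I h r lam f s phi y) <= M.
Proof.
  intros Hs Hy HM. rewrite (Lop_eq s phi M y Hs Hy HM).
  pose proof (lam_b _ Hs). pose proof (f_pos _ y Hs Hy). pose proof (M_nn phi M HM).
  set (c := / (lam (fst s) * f (fst s) y)).
  assert (Hc : 0 < c) by (apply Rinv_0_lt_compat, Rmult_lt_0_compat; lra).
  eapply Rle_trans. apply (csum_bound _ (fun j => w (fst s) y j * (c * M))).
  - intros j. destruct (I j) eqn:Ej.
    + rewrite Cmod_mult, Wt_mod by auto. unfold Rdiv. fold c. rewrite <- Rmult_assoc.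
      apply Rmult_le_compat_l. apply Rmult_le_pos. apply w_nn; auto. lra. apply HM, h_in; auto.
    + rewrite Cmod_R, Rabs_R0. apply Rmult_le_pos. apply w_nn; auto. apply Rmult_le_pos; lra.
  - apply ex_series_scal_r, w_ser; auto.
  - rewrite Series_scal_r, w_sum by auto. unfold c. right. field. split; lra.
Qed.



Lemma Cmod_le_sum (p : C) : Cmod p <= Rabs (fst p) + Rabs (snd p).
Proof.
  unfold Cmod. rewrite <- (sqrt_pow2 (Rabs (fst p) + Rabs (snd p))) by (pose proof (Rabs_pos (fst p)); pose proof (Rabs_pos (snd p)); lra).
  apply sqrt_le_1_alt. pose proof (Rabs_pos (fst p)); pose proof (Rabs_pos (snd p)).
  rewrite <- (pow2_abs (fst p)), <- (pow2_abs (snd p)). nra.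
Qed.

Definition Ca := rpow C0 alpha.
Lemma Ca_nn : 0 <= Ca. Proof. apply rpow_nonneg. Qed.

Lemma trig_part E E' th th' X : 0 <= E -> Rabs (th - th') <= X ->
  Rabs (E * cos th - E' * cos th') <= E * (2 * rpow X alpha) + Rabs (E - E').
Proof.
  intros HE0 HX. replace (E * cos th - E' * cos th') with (E * (cos th - cos th') + (E - E') * cos th') by ring.
  eapply Rle_trans. apply Rabs_triang. rewrite !Rabs_mult. rewrite (Rabs_pos_eq E) by auto.
  apply Rplus_le_compat. apply Rmult_le_compat_l; auto.
  apply min2_rpow. apply alpha_b. apply Rabs_pos. eapply Rle_trans. apply cos_lip. auto.
  eapply Rle_trans. apply Rabs_triang. rewrite Rabs_Ropp. pose proof (COS_bound th); pose proof (COS_bound th').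
  apply Rplus_le_compat; apply Rabs_le; lra.
  rewrite <- (Rmult_1_r (Rabs (E - E'))) at 2. apply Rmult_le_compat_l. apply Rabs_pos. apply Rabs_le, COS_bound.
Qed.
Lemma trig_part_s E E' th th' X : 0 <= E -> Rabs (th - th') <= X ->
  Rabs (E * sin th - E' * sin th') <= E * (2 * rpow X alpha) + Rabs (E - E').
Proof.
  intros HE0 HX. replace (E * sin th - E' * sin th') with (E * (sin th - sin th') + (E - E') * sin th') by ring.
  eapply Rle_trans. apply Rabs_triang. rewrite !Rabs_mult. rewrite (Rabs_pos_eq E) by auto.
  apply Rplus_le_compat. apply Rmult_le_compat_l; auto.
  apply min2_rpow. apply alpha_b. apply Rabs_pos. eapply Rle_trans. apply sin_lip. auto.
  eapply Rle_trans. apply Rabs_triang. rewrite Rabs_Ropp. pose proof (SIN_bound th); pose proof (SIN_bound th').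
  apply Rplus_le_compat; apply Rabs_le; lra.
  rewrite <- (Rmult_1_r (Rabs (E - E'))) at 2. apply Rmult_le_compat_l. apply Rabs_pos. apply Rabs_le, SIN_bound.
Qed.

Lemma in01_dist y y' : in01 y -> in01 y' -> Rabs (y - y') <= 1.
Proof. unfold in01; intros. apply Rabs_le; lra. Qed.
Lemma t_ge y y' : in01 y -> in01 y' -> Rabs (y - y') <= rpow (Rabs (y - y')) alpha.
Proof. intros. apply rpow_ge_id. apply alpha_b. split. apply Rabs_pos. apply in01_dist; auto. Qed.
Lemma t_le1 y y' : in01 y -> in01 y' -> rpow (Rabs (y - y')) alpha <= 1.
Proof. intros. apply rpow_le1. pose proof alpha_b; lra. split. apply Rabs_pos. apply in01_dist; auto. Qed.

Lemma exp_diff s R R' y y' : Rabs s <= 1 -> in01 y -> in01 y' -> Rabs (R - R') <= C0 * Rabs (y - y') ->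
  Rabs (exp (- (s * R)) - exp (- (s * R'))) <= exp (- (s * R)) * (C0 * exp C0 * rpow (Rabs (y - y')) alpha) /\
  exp (- (s * R')) <= exp (- (s * R)) * exp C0.
Proof.
  intros Hs Hy Hy' HR. set (u := s * (R - R')).
  assert (Hu : Rabs u <= C0 * Rabs (y - y')).
  { unfold u. rewrite Rabs_mult. pose proof (Rabs_pos (R - R')). pose proof (Rabs_pos s).
    apply Rle_trans with (1 * Rabs (R - R')). apply Rmult_le_compat_r; lra. lra. }
  pose proof (in01_dist y y' Hy Hy'). pose proof C0_pos. pose proof (Rabs_pos (y - y')).
  assert (Hu1 : Rabs u <= C0).
  { apply Rle_trans with (C0 * Rabs (y - y')); auto. rewrite <- (Rmult_1_r C0) at 2.
    apply Rmult_le_compat_l; lra. }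
  assert (E : exp (- (s * R')) = exp (- (s * R)) * exp u) by (rewrite <- exp_plus; f_equal; unfold u; ring).
  rewrite E. split.
  - replace (exp (- (s * R)) - exp (- (s * R)) * exp u) with (- (exp (- (s * R)) * (exp u - 1))) by ring.
    rewrite Rabs_Ropp, Rabs_mult, Rabs_pos_eq by (left; apply exp_pos).
    apply Rmult_le_compat_l. left; apply exp_pos. eapply Rle_trans. apply exp_m1_bound.
    pose proof (t_ge y y' Hy Hy'). assert (exp (Rabs u) <= exp C0).
    { destruct Hu1 as [Hl|Hl]; [left; apply exp_increasing; auto|rewrite Hl; lra]. }
    pose proof (exp_pos (Rabs u)). pose proof (Rabs_pos u).
    apply Rle_trans with (C0 * Rabs (y - y') * exp C0). apply Rmult_le_compat; auto; lra.
    pose proof (exp_pos C0).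
    replace (C0 * Rabs (y - y') * exp C0) with ((C0 * exp C0) * Rabs (y - y')) by ring.
    apply Rmult_le_compat_l; auto. nra.
  - apply Rmult_le_compat_l. left; apply exp_pos.
    assert (Huc : u <= C0) by (pose proof (Rle_abs u); lra).
    destruct Huc as [Hl|Hl]; [left; apply exp_increasing; auto|rewrite Hl; lra].
Qed.

Definition validw (w : list nat) := forall i, In i w -> I i = true.

Lemma branch_cons i w x : branch h (i :: w) x = h i (branch h w x).
Proof. reflexivity. Qed.
Lemma branch_app w i x : branch h (w ++ i :: nil) x = branch h w (h i x).
Proof. induction w as [|j w IH]; simpl; auto. rewrite IH. auto. Qed.
Lemma branch_in w x : validw w -> in01 x -> in01 (branch h w x).
Proof.
  induction w as [|i w IH]; intros Hw Hx; simpl; auto.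
  apply h_in. apply Hw; simpl; auto. apply IH; auto. intros k Hk; apply Hw; simpl; auto.
Qed.



Lemma lam0 : lam 0 = 1. Proof. dE. auto. Qed.

Lemma w0_eq x j : I j = true -> w 0 x j = Rabs (Derive (h j) x) * f 0 (h j x).
Proof. intros Hj. unfold w. rewrite Hj. rewrite Rmult_0_l, Ropp_0, exp_0. ring. Qed.

Lemma f0_step j x : I j = true -> in01 x -> Rabs (Derive (h j) x) * f 0 (h j x) <= f 0 x.
Proof.
  intros Hj Hx. rewrite <- w0_eq by auto.
  replace (f 0 x) with (lam 0 * f 0 x) by (rewrite lam0; ring).
  rewrite <- (w_sum 0 x eps1_0 Hx). apply term_le_Series. intros; apply w_nn; auto using eps1_0.
  apply w_ser; auto using eps1_0.
Qed.

Lemma valid_exists : exists j, I j = true.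
Proof.
  apply Classical_Prop.NNPP. intros Hn.
  pose proof (w_sum 0 (1/2) eps1_0 half_in) as E.
  rewrite (Series_ext _ (fun _ => 0)) in E.
  - rewrite Series_zero, lam0 in E. pose proof (f_pos 0 (1/2) eps1_0 half_in). lra.
  - intros j. unfold w. destruct (I j) eqn:Ej; auto. exfalso; apply Hn; exists j; auto.
Qed.

Lemma D_low j x : I j = true -> in01 x -> exp (- C0) * Rabs (Derive (h j) (1/2)) <= Rabs (Derive (h j) x).
Proof.
  intros Hj Hx. pose proof (logD j x (1/2) Hj Hx half_in) as H.
  pose proof (t_le1 x (1/2) Hx half_in). pose proof C0_pos.
  pose proof (rpow_nonneg (Rabs (x - 1/2)) alpha).
  assert (Hl : ln (Rabs (Derive (h j) (1/2))) - C0 <= ln (Rabs (Derive (h j) x))).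
  { pose proof (Rle_abs (ln (Rabs (Derive (h j) (1/2))) - ln (Rabs (Derive (h j) x)))).
    rewrite Rabs_minus_sym in H. nra. }
  pose proof (h_der j x Hj Hx) as [_ Hp]. pose proof (h_der j (1/2) Hj half_in) as [_ Hp2].
  rewrite <- (exp_ln (Rabs (Derive (h j) x))) by auto.
  rewrite <- (exp_ln (Rabs (Derive (h j) (1/2)))) at 1 by auto.
  rewrite <- exp_plus. destruct (Req_dec (- C0 + ln (Rabs (Derive (h j) (1/2)))) (ln (Rabs (Derive (h j) x)))) as [E|E].
  rewrite E; lra. left; apply exp_increasing. lra.
Qed.

Lemma validw_cons i w : validw (i :: w) <-> I i = true /\ validw w.
Proof. split. intros H. split. apply H; simpl; auto. intros k Hk; apply H; simpl; auto.
  intros [H1 H2] k [<-|Hk]; auto. Qed.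

Lemma branch_der w x : validw w -> in01 x -> ex_derive (branch h w) x.
Proof.
  intros Hw Hx. destruct w as [|i w].
  - simpl. apply (ex_derive_id x).
  - dS. apply (Hbr (length (i :: w)) (i :: w)); auto. simpl; lia.
Qed.
Lemma branch_chain i w x : validw (i :: w) -> in01 x ->
  Derive (branch h (i :: w)) x = Derive (branch h w) x * Derive (h i) (branch h w x).
Proof.
  intros Hw Hx. apply validw_cons in Hw as [Hi Hw].
  change (Derive (fun t => h i (branch h w t)) x = Derive (branch h w) x * Derive (h i) (branch h w x)).
  apply Derive_comp. apply h_der; auto. apply branch_in; auto. apply branch_der; auto.
Qed.
Lemma branch_id_der x : Derive (branch h nil) x = 1.
Proof. apply Derive_id. Qed.

Lemma f0_word w x : validw w -> in01 x -> Rabs (Derive (branch h w) x) * f 0 (branch h w x) <= f 0 x.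
Proof.
  induction w as [|i w IH]; intros Hw Hx.
  - rewrite branch_id_der, Rabs_R1. simpl. lra.
  - rewrite branch_chain by auto. apply validw_cons in Hw as [Hi Hw'].
    rewrite branch_cons, Rabs_mult.
    pose proof (f0_step i (branch h w x) Hi (branch_in w x Hw' Hx)).
    pose proof (Rabs_pos (Derive (branch h w) x)). pose proof (IH Hw' Hx).
    apply Rle_trans with (Rabs (Derive (branch h w) x) * f 0 (branch h w x)); auto.
    rewrite Rmult_assoc. apply Rmult_le_compat_l; auto.
Qed.

Lemma word_low w : validw w -> exists k, 0 < k /\ forall x, in01 x -> k <= Rabs (Derive (branch h w) x).
Proof.
  induction w as [|i w IH]; intros Hw.
  - exists 1. split. lra. intros x _. rewrite branch_id_der, Rabs_R1. lra.
  - pose proof Hw as Hw0. apply validw_cons in Hw as [Hi Hw']. destruct (IH Hw') as [k [Hk Hkx]].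
    pose proof (h_der i (1/2) Hi half_in) as [_ Hp].
    exists (k * (exp (- C0) * Rabs (Derive (h i) (1/2)))). split.
    apply Rmult_lt_0_compat; auto. apply Rmult_lt_0_compat; auto. apply exp_pos.
    intros x Hx. rewrite branch_chain by auto. rewrite Rabs_mult.
    apply Rmult_le_compat; auto. lra. apply Rmult_le_pos. left; apply exp_pos. apply Rabs_pos.
    apply D_low; auto. apply branch_in; auto.
Qed.

Lemma word_lip w x z : validw w -> w <> nil -> in01 x -> in01 z ->
  Rabs (branch h w x - branch h w z) <= C0 * rho ^ length w * Rabs (x - z).
Proof.
  intros Hw Hne Hx Hz. apply lip_U; auto. intros t Ht. dS. apply (Hbr (length w) w); auto.
  destruct w; [contradiction|simpl; lia].
Qed.

Lemma f0_single j : I j = true -> (forall k, I k = true -> k = j) -> False.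
Proof.
  intros Hj Hu.
  assert (Eq : forall y, in01 y -> f 0 y = Rabs (Derive (h j) y) * f 0 (h j y)).
  { intros y Hy. pose proof (w_sum 0 y eps1_0 Hy) as E. rewrite lam0, Rmult_1_l in E.
    rewrite <- E, <- w0_eq by auto. apply Series_single. intros k Hk. unfold w.
    destruct (I k) eqn:Ek; auto. exfalso; apply Hk; auto. }
  assert (Hrep : forall n, validw (repeat j n)).
  { intros n i Hi. apply repeat_spec in Hi. subst; auto. }
  assert (Hind : forall n x, in01 x -> f 0 x = Rabs (Derive (branch h (repeat j n)) x) * f 0 (branch h (repeat j n) x)).
  { induction n as [|n IH]; intros x Hx.
    - simpl repeat. rewrite branch_id_der, Rabs_R1. simpl. ring.
    - change (repeat j (S n)) with (j :: repeat j n).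
      rewrite branch_chain by (auto; apply (Hrep (S n))). rewrite branch_cons, Rabs_mult.
      rewrite Rmult_assoc, <- Eq by (apply branch_in; auto). apply IH; auto. }
  pose proof (f_pos 0 (1/2) eps1_0 half_in) as Hf0. pose proof Sf_pos. pose proof C0_pos. pose proof rho_b.
  destruct (pow_lt_1_zero rho ltac:(rewrite Rabs_pos_eq; lra) (f 0 (1/2) / (C0 * Sf))) as [N HN].
  { apply Rdiv_lt_0_compat; auto. apply Rmult_lt_0_compat; lra. }
  set (n := S N). specialize (HN n ltac:(unfold n; lia)). rewrite Rabs_pos_eq in HN by (apply pow_le; lra).
  assert (Hb : Rabs (Derive (branch h (repeat j n)) (1/2)) <= C0 * rho ^ n).
  { dS. apply (Hbr n (repeat j n)); auto using half_in. unfold n; lia. apply repeat_length.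
    intros i Hi; apply (Hrep n i Hi). }
  assert (Hu2 : f 0 (branch h (repeat j n) (1/2)) <= Sf) by (apply f_up; auto using eps1_0; apply branch_in; auto using half_in).
  assert (Hp : 0 < f 0 (branch h (repeat j n) (1/2))) by (apply f_pos; auto using eps1_0; apply branch_in; auto using half_in).
  assert (Hlt : rho ^ n * (C0 * Sf) < f 0 (1/2)).
  { apply Rmult_lt_reg_r with (/ (C0 * Sf)). apply Rinv_0_lt_compat, Rmult_lt_0_compat; lra.
    rewrite Rmult_assoc, Rinv_r, Rmult_1_r by (apply Rgt_not_eq, Rmult_lt_0_compat; lra). exact HN. }
  rewrite (Hind n (1/2) half_in) in Hlt.
  pose proof (Rabs_pos (Derive (branch h (repeat j n)) (1/2))).
  assert (Rabs (Derive (branch h (repeat j n)) (1/2)) * f 0 (branch h (repeat j n) (1/2)) <= C0 * rho ^ n * Sf)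
    by (apply Rmult_le_compat; lra).
  lra.
Qed.

Lemma fp_ivt (g : R -> R) x1 x2 : (forall t, in01 t -> ex_derive g t) -> in01 x1 -> in01 x2 -> x1 < x2 ->
  x1 <= g x1 -> g x2 <= x2 -> exists p, in01 p /\ g p = p.
Proof.
  intros Hg H1 H2 H12 Hg1 Hg2.
  destruct (Req_dec (g x1) x1) as [E|E]. { exists x1; auto. }
  destruct (Req_dec (g x2) x2) as [E2|E2]. { exists x2; auto. }
  destruct (Ranalysis5.IVT_interv (fun t => t - g t) x1 x2) as [p [Hp Hpe]]; auto.
  - intros t Ht. assert (Ht' : in01 t) by (unfold in01 in *; lra).
    apply continuity_pt_filterlim. apply (@ex_derive_continuous R_AbsRing R_NormedModule (fun u => u - g u)).
    assert (ex_derive g t) by auto. auto_derive. auto.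
  - lra.
  - lra.
  - exists p. split. unfold in01 in *; lra. lra.
Qed.

Lemma ab_b i : I i = true -> 0 <= a i < b i /\ b i <= 1.
Proof. dS. intros Hi. apply Hab; auto. Qed.
Lemma disj i j : I i = true -> I j = true -> i <> j -> b i <= a j \/ b j <= a i.
Proof. dS. intros. apply Hdisj; auto. Qed.

Lemma h_cont j t : I j = true -> in01 t -> continuity_pt (h j) t.
Proof.
  intros Hj Ht. apply continuity_pt_filterlim. apply (@ex_derive_continuous R_AbsRing R_NormedModule).
  apply h_der; auto.
Qed.

Lemma fp_two j k : I j = true -> I k = true -> a j = 0 -> b k = 1 -> b j <= a k ->
  exists w p, validw w /\ w <> nil /\ in01 p /\ branch h w p = p.
Proof.
  intros Hj Hk Haj Hbk Hjk.
  pose proof (ab_b j Hj) as Bj. pose proof (ab_b k Hk) as Bk.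
  set (c := exp (- C0) * Rabs (Derive (h j) (1/2))).
  assert (Hc : 0 < c) by (apply Rmult_lt_0_compat; [apply exp_pos|apply (h_der j (1/2) Hj half_in)]).
  assert (Hlow : forall x z, in01 x -> in01 z -> c * Rabs (x - z) <= Rabs (h j x - h j z)).
  { intros x z Hx Hz. apply lipl_U; auto. intros t Ht. split. apply h_der; auto. apply D_low; auto. }
  set (tau := Rmin (1/4) (c/8)). set (eta := c / 4).
  assert (Ht1 : tau <= 1/4) by apply Rmin_l. assert (Ht2 : tau <= c/8) by apply Rmin_r.
  assert (Ht0 : 0 < tau) by (unfold tau, Rmin; destruct (Rle_dec (1/4) (c/8)); lra).
  set (x2 := (1 + b j) / 2).
  assert (Hx2 : in01 x2) by (unfold x2, in01; lra).
  assert (Hgx2 : forall u, in01 u -> h j u < x2).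
  { intros u Hu. pose proof (h_in j u Hj Hu). unfold x2; lra. }
  destruct (Classical_Prop.classic (forall t, 0 < t <= tau -> eta <= h j t)) as [Hall|Hex].
  - destruct (fp_ivt (h j) tau x2) as [p [Hp Hpe]].
    + intros t Ht; apply h_der; auto.
    + unfold in01; lra.
    + auto.
    + unfold x2; lra.
    + pose proof (Hall tau ltac:(lra)). unfold eta in *; lra.
    + left; apply Hgx2; auto.
    + exists (j :: nil), p. split. intros i [<-|[]]; auto. split. discriminate. split; auto.
  - apply Classical_Pred_Type.not_all_ex_not in Hex as [t0 Ht0n].
    apply Classical_Prop.imply_to_and in Ht0n as [Ht0r Ht0l]. apply Rnot_le_lt in Ht0l.
    assert (Hfar : forall t, 1 - tau <= t < 1 -> eta <= h j t).
    { intros t Ht. assert (Hti : in01 t) by (unfold in01; lra). assert (Ht0i : in01 t0) by (unfold in01; lra).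
      pose proof (Hlow t t0 Hti Ht0i). rewrite (Rabs_pos_eq (t - t0)) in H by lra.
      assert (c * (t - t0) >= c / 2) by nra.
      pose proof (h_in j t0 Hj Ht0i) as [[Hp0 _] _].
      pose proof (h_in j t Hj Hti) as [[Hpt _] _].
      destruct (Rle_dec (h j t0) (h j t)).
      - rewrite Rabs_pos_eq in H by lra. unfold eta; lra.
      - rewrite Rabs_left in H by lra. unfold eta in *; lra. }
    assert (HL : exists L, 0 < L /\ forall t, a k < t < 1 -> L <= h j t).
    { destruct (Rlt_dec (a k) (1 - tau)) as [Hlt|Hge].
      - destruct (continuity_ab_min (h j) (a k) (1 - tau)) as [mx [Hmx Hmxr]]. lra.
        { intros t Ht. apply h_cont; auto. unfold in01; lra. }
        pose proof (h_in j mx Hj ltac:(unfold in01; lra)) as [[Hp0 _] _].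
        exists (Rmin eta (h j mx)). split. unfold Rmin; destruct (Rle_dec eta (h j mx)); unfold eta; lra.
        intros t Ht. destruct (Rle_dec t (1 - tau)).
        + eapply Rle_trans. apply Rmin_r. apply Hmx; lra.
        + eapply Rle_trans. apply Rmin_l. apply Hfar; lra.
      - exists eta. split. unfold eta; lra. intros t Ht. apply Hfar; lra. }
    destruct HL as [L [HL0 HL]].
    assert (Hg : forall x, in01 x -> L <= branch h (j :: k :: nil) x).
    { intros x Hx. change (L <= h j (h k x)). apply HL. pose proof (h_in k x Hk Hx). lra. }
    set (x1 := Rmin L (1/2) / 2).
    assert (Hx1a : 0 < x1) by (unfold x1, Rmin; destruct (Rle_dec L (1/2)); lra).
    assert (Hx1b : x1 <= L / 2) by (unfold x1; pose proof (Rmin_l L (1/2)); lra).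
    assert (Hx1c : x1 <= 1/4) by (unfold x1; pose proof (Rmin_r L (1/2)); lra).
    assert (Hv : validw (j :: k :: nil)) by (intros i [<-|[<-|[]]]; auto).
    destruct (fp_ivt (branch h (j :: k :: nil)) x1 x2) as [p [Hp Hpe]].
    + intros t Ht; apply branch_der; auto.
    + unfold in01; lra.
    + auto.
    + unfold x2; lra.
    + pose proof (Hg x1 ltac:(unfold in01; lra)). lra.
    + change (h j (h k x2) <= x2). left; apply Hgx2. apply h_in; auto.
    + exists (j :: k :: nil), p. split; auto. split. discriminate. split; auto.
Qed.

Lemma fixed_point : exists w p, validw w /\ w <> nil /\ in01 p /\ branch h w p = p.
Proof.
  destruct (Classical_Prop.classic (exists i, I i = true /\ 0 < a i /\ b i < 1)) as [[i [Hi [Ha Hb]]]|HnA].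
  - pose proof (ab_b i Hi).
    destruct (fp_ivt (branch h (i :: nil)) (a i / 2) ((1 + b i) / 2)) as [p [Hp Hpe]].
    + intros t Ht; apply branch_der; auto. intros k [<-|[]]; auto.
    + unfold in01; lra.
    + unfold in01; lra.
    + lra.
    + change (a i / 2 <= h i (a i / 2)). pose proof (h_in i (a i / 2) Hi ltac:(unfold in01; lra)). lra.
    + change (h i ((1 + b i) / 2) <= (1 + b i) / 2). pose proof (h_in i ((1 + b i) / 2) Hi ltac:(unfold in01; lra)). lra.
    + exists (i :: nil), p. split. intros k [<-|[]]; auto. split. discriminate. auto.
  - assert (Hedge : forall i, I i = true -> a i = 0 \/ b i = 1).
    { intros i Hi. pose proof (ab_b i Hi). destruct (Req_dec (a i) 0); auto. destruct (Req_dec (b i) 1); auto.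
      exfalso. apply HnA. exists i. repeat split; auto; lra. }
    destruct valid_exists as [j0 Hj0].
    destruct (Classical_Prop.classic (exists k, I k = true /\ k <> j0)) as [[k0 [Hk0 Hne]]|Hone].
    + pose proof (ab_b j0 Hj0). pose proof (ab_b k0 Hk0).
      destruct (disj j0 k0 Hj0 Hk0 (not_eq_sym Hne)) as [D1|D1];
      destruct (Hedge j0 Hj0) as [E1|E1]; destruct (Hedge k0 Hk0) as [E2|E2].
      * lra.
      * apply (fp_two j0 k0); auto.
      * lra.
      * lra.
      * lra.
      * lra.
      * apply (fp_two k0 j0); auto.
      * lra.
    + exfalso. apply (f0_single j0 Hj0). intros k Hk. apply Classical_Prop.NNPP. intros Hn. apply Hone. exists k; auto.
Qed.

Fixpoint wpow (w : list nat) (n : nat) : list nat :=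
  match n with O => nil | S m => w ++ wpow w m end.

Lemma branch_app_gen u v x : branch h (u ++ v) x = branch h u (branch h v x).
Proof. induction u as [|i u IH]; simpl; auto. rewrite IH; auto. Qed.

Lemma f0_lower : exists m0, 0 < m0 /\ forall x, in01 x -> m0 <= f 0 x.
Proof.
  destruct fixed_point as (w & p & Hw & Hne & Hp & Hfix).
  assert (Hwv : forall n, validw (wpow w n)).
  { induction n; simpl. intros i []. intros i Hi. apply in_app_or in Hi as [Hi|Hi]; auto. }
  assert (Hwl : forall n, length (wpow w n) = (n * length w)%nat).
  { induction n; simpl; auto. rewrite length_app, IHn. lia. }
  assert (Hwf : forall n, branch h (wpow w n) p = p).
  { induction n; simpl; auto. rewrite branch_app_gen, IHn. auto. }
  assert (HL : (1 <= length w)%nat) by (destruct w; [contradiction|simpl; lia]).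
  pose proof (f_pos 0 p eps1_0 Hp) as Hf0p. assert (HHf : 0 <= Hf) by (pose proof H0_nn; unfold Hf; lra). pose proof C0_pos. pose proof rho_b.
  set (eta := f 0 p / (2 * (Hf + 1))).
  assert (Heta : 0 < eta) by (unfold eta; apply Rdiv_lt_0_compat; lra).
  destruct (rpow_small eta alpha ltac:(apply alpha_b) Heta) as [dl [Hdl Hdlr]].
  destruct (pow_lt_1_zero rho ltac:(rewrite Rabs_pos_eq; lra) (dl / C0)) as [N HN].
  { apply Rdiv_lt_0_compat; lra. }
  set (n := S N). set (W := wpow w n).
  assert (HWv : validw W) by apply Hwv.
  assert (HWne : W <> nil).
  { unfold W, n. simpl. destruct w; [contradiction|discriminate]. }
  assert (HWlen : (n <= length W)%nat) by (unfold W; rewrite Hwl; nia).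
  assert (Hrn : rho ^ length W <= rho ^ n) by (apply pow_le_mono_r; auto; lra).
  specialize (HN n ltac:(unfold n; lia)). rewrite Rabs_pos_eq in HN by (apply pow_le; lra).
  destruct (word_low W HWv) as [k [Hk Hkx]].
  exists (k * (f 0 p / 2)). split. apply Rmult_lt_0_compat; lra.
  intros x Hx.
  assert (Hgx : in01 (branch h W x)) by (apply branch_in; auto).
  assert (Hdist : Rabs (branch h W x - p) <= dl).
  { rewrite <- (Hwf n) at 1. fold W. eapply Rle_trans. apply word_lip; auto.
    pose proof (in01_dist x p Hx Hp). pose proof (Rabs_pos (x - p)).
    assert (Hr0 : 0 <= rho ^ length W) by (apply pow_le; lra).
    apply Rle_trans with (C0 * rho ^ length W). rewrite <- (Rmult_1_r (C0 * rho ^ length W)) at 2.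
    apply Rmult_le_compat_l; auto. apply Rmult_le_pos; lra.
    apply Rle_trans with (C0 * (dl / C0)). apply Rmult_le_compat_l; lra.
    right; field; lra. }
  assert (Hfg : f 0 p / 2 <= f 0 (branch h W x)).
  { pose proof (f_hol 0 (branch h W x) p eps1_0 Hgx Hp) as Hh.
    pose proof (Hdlr (Rabs (branch h W x - p)) (conj (Rabs_pos _) Hdist)) as Hr.
    assert (Hf * rpow (Rabs (branch h W x - p)) alpha <= Hf * eta) by (apply Rmult_le_compat_l; auto).
    assert (Hf * eta <= f 0 p / 2).
    { unfold eta. apply Rmult_le_reg_r with (2 * (Hf + 1)). lra.
      replace (Hf * (f 0 p / (2 * (Hf + 1))) * (2 * (Hf + 1))) with (Hf * f 0 p) by (field; lra).
      replace (f 0 p / 2 * (2 * (Hf + 1))) with ((Hf + 1) * f 0 p) by field. nra. }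
    pose proof (Rle_abs (f 0 p - f 0 (branch h W x))). rewrite Rabs_minus_sym in Hh. lra. }
  pose proof (f0_word W x HWv Hx). pose proof (Hkx x Hx).
  apply Rle_trans with (Rabs (Derive (branch h W) x) * f 0 (branch h W x)); auto.
  apply Rmult_le_compat; lra.
Qed.

Variable m0 : R.
Hypothesis Hm0 : 0 < m0.
Hypothesis Hm0f : forall x, in01 x -> m0 <= f 0 x.
Definition mf := m0 / 2.
Lemma f_low s x : Rabs s < eps1 -> in01 x -> mf <= f s x.
Proof. intros Hs Hx. pose proof (f_cmp s x Hs Hx). pose proof (Hm0f x Hx). unfold mf; lra. Qed.
Lemma mf_pos : 0 < mf. Proof. unfold mf; lra. Qed.

Lemma D_diff j y y' : I j = true -> in01 y -> in01 y' ->
  Rabs (Rabs (Derive (h j) y) - Rabs (Derive (h j) y')) <=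
    Rabs (Derive (h j) y) * (C0 * exp C0 * rpow (Rabs (y - y')) alpha).
Proof.
  intros Hj Hy Hy'. set (D := Rabs (Derive (h j) y)). set (D' := Rabs (Derive (h j) y')).
  assert (HD : 0 < D) by apply (h_der j y Hj Hy). assert (HD' : 0 < D') by apply (h_der j y' Hj Hy').
  set (v := ln D' - ln D).
  assert (Hv : Rabs v <= C0 * rpow (Rabs (y - y')) alpha).
  { unfold v. rewrite Rabs_minus_sym. apply logD; auto. }
  pose proof (t_le1 y y' Hy Hy'). pose proof C0_pos. pose proof (rpow_nonneg (Rabs (y - y')) alpha).
  assert (Hv1 : Rabs v <= C0) by nra.
  assert (E : D' = D * exp v) by (unfold v; unfold Rminus; rewrite exp_plus, exp_Ropp, !exp_ln by auto; field; lra).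
  rewrite E. replace (D - D * exp v) with (- (D * (exp v - 1))) by ring.
  rewrite Rabs_Ropp, Rabs_mult, Rabs_pos_eq by lra. apply Rmult_le_compat_l. lra.
  eapply Rle_trans. apply exp_m1_bound.
  assert (exp (Rabs v) <= exp C0) by (destruct Hv1 as [Hl|Hl]; [left; apply exp_increasing; auto|rewrite Hl; lra]).
  pose proof (exp_pos (Rabs v)). pose proof (Rabs_pos v). pose proof (exp_pos C0).
  apply Rle_trans with (C0 * rpow (Rabs (y - y')) alpha * exp C0). apply Rmult_le_compat; auto; lra.
  right; ring.
Qed.

Lemma Wt_var s j y y' :
  Rabs (fst s) < eps1 -> Rabs (fst s) <= 1 -> in01 y -> in01 y' -> I j = true ->
  Cmod (Wt s j y - Wt s j y')%C <=
   w (fst s) y j * ((4 * Ca * rpow (Rabs (snd s)) alpha + 2 * C0 * exp C0 + C0 * exp C0 * exp C0)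
                     * rpow (Rabs (y - y')) alpha / (lam (fst s) * f (fst s) y))
 + w (fst s) y' j * ((Hf * Ca * rpow (Rabs (y - y')) alpha / mf
                     + Rabs (f (fst s) y - f (fst s) y') / f (fst s) y') / (lam (fst s) * f (fst s) y)).
Proof.
  destruct s as [sg bb]. simpl fst; simpl snd. intros Hs Hs1 Hy Hy' Hj.
  set (t := rpow (Rabs (y - y')) alpha).
  set (R := r (h j y)). set (R' := r (h j y')).
  set (E := exp (- (sg * R))). set (E' := exp (- (sg * R'))).
  set (D := Rabs (Derive (h j) y)). set (D' := Rabs (Derive (h j) y')).
  set (g := f sg (h j y)). set (g' := f sg (h j y')).
  set (L := lam sg). set (fy := f sg y). set (fy' := f sg y').
  set (c := / (L * fy)). set (c' := / (L * fy')).
  set (th := - (bb * R)). set (th' := - (bb * R')).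
  assert (HL : 0 < L) by apply (lam_b sg Hs).
  assert (Hfy : 0 < fy) by (apply f_pos; auto). assert (Hfy' : 0 < fy') by (apply f_pos; auto).
  assert (Hg : mf <= g) by (apply f_low; auto; apply h_in; auto).
  assert (Hg' : mf <= g') by (apply f_low; auto; apply h_in; auto).
  pose proof mf_pos as Hmf.
  assert (HD : 0 < D) by apply (h_der j y Hj Hy). assert (HD' : 0 < D') by apply (h_der j y' Hj Hy').
  assert (HE0 : 0 < E) by apply exp_pos. assert (HE0' : 0 < E') by apply exp_pos.
  assert (Hc : 0 < c) by (apply Rinv_0_lt_compat, Rmult_lt_0_compat; lra).
  assert (Hc' : 0 < c') by (apply Rinv_0_lt_compat, Rmult_lt_0_compat; lra).
  assert (Ht : 0 <= t) by apply rpow_nonneg.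
  pose proof Ca_nn as HCa. pose proof C0_pos as HC0. pose proof (exp_pos C0) as HeC.
  set (rb := rpow (Rabs bb) alpha). assert (Hrb : 0 <= rb) by apply rpow_nonneg.
  assert (HRR : Rabs (R - R') <= C0 * Rabs (y - y')) by (apply rh_lip; auto).
  destruct (exp_diff sg R R' y y' Hs1 Hy Hy' HRR) as [HEE HE'].
  fold E E' t in HEE, HE'.
  assert (Hee : ee (sg, bb) j y = (E * cos th, E * sin th)) by (rewrite ee_eq; reflexivity).
  assert (Hee' : ee (sg, bb) j y' = (E' * cos th', E' * sin th')) by (rewrite ee_eq; reflexivity).
  assert (Hth : Rabs (th - th') <= Rabs bb * (C0 * Rabs (y - y'))).
  { unfold th, th'. replace (- (bb * R) - - (bb * R')) with (- (bb * (R - R'))) by ring.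
    rewrite Rabs_Ropp, Rabs_mult. apply Rmult_le_compat_l; auto using Rabs_pos. }
  assert (HX : rpow (Rabs bb * (C0 * Rabs (y - y'))) alpha = rb * (Ca * t)).
  { rewrite (rpow_mult (Rabs bb)) by (first [apply Rabs_pos | apply Rmult_le_pos; [lra|apply Rabs_pos]]).
    rewrite (rpow_mult C0) by (first [apply Rabs_pos | lra]). reflexivity. }
  assert (Hd1 : Cmod (ee (sg, bb) j y - ee (sg, bb) j y')%C <= E * ((4 * Ca * rb + 2 * C0 * exp C0) * t)).
  { rewrite Hee, Hee'. eapply Rle_trans. apply Cmod_le_sum. simpl fst; simpl snd.
    pose proof (trig_part E E' th th' _ (Rlt_le _ _ HE0) Hth) as T1.
    pose proof (trig_part_s E E' th th' _ (Rlt_le _ _ HE0) Hth) as T2.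
    rewrite HX in T1, T2.
    replace (E * cos th + - (E' * cos th')) with (E * cos th - E' * cos th') by ring.
    replace (E * sin th + - (E' * sin th')) with (E * sin th - E' * sin th') by ring.
    eapply Rle_trans. apply Rplus_le_compat; [exact T1|exact T2].
    replace (E * ((4 * Ca * rb + 2 * C0 * exp C0) * t)) with
      (2 * (E * (2 * (rb * (Ca * t)))) + 2 * (E * (C0 * exp C0 * t))) by ring. lra. }
  assert (HDD : Rabs (D - D') <= D * (C0 * exp C0 * t)) by (apply D_diff; auto).
  assert (Hgg : Rabs (g - g') <= Hf * (Ca * t)).
  { eapply Rle_trans. apply f_hol; auto; apply h_in; auto.
    pose proof H0_nn. unfold Hf. apply Rmult_le_compat_l. lra.
    assert (Ect : Ca * t = rpow (C0 * Rabs (y - y')) alpha)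
      by (unfold Ca, t; rewrite rpow_mult; [reflexivity|lra|apply Rabs_pos]).
    rewrite Ect. apply rpow_mono. pose proof alpha_b; lra.
    split. apply Rabs_pos. apply h_lip; auto. }
  assert (Hcc : Rabs (c - c') = c * (Rabs (fy - fy') / fy')).
  { unfold c, c'. replace (/ (L * fy) - / (L * fy')) with (/ (L * fy) * ((fy' - fy) / fy')) by (field; lra).
    rewrite (Rabs_minus_sym fy fy').
    rewrite Rabs_mult, Rabs_pos_eq by (left; apply Rinv_0_lt_compat, Rmult_lt_0_compat; lra).
    unfold Rdiv. rewrite Rabs_mult, (Rabs_pos_eq (/ fy')) by (left; apply Rinv_0_lt_compat; lra). auto. }
  assert (Dec : (Wt (sg, bb) j y - Wt (sg, bb) j y' =
     RtoC c * (ee (sg, bb) j y - ee (sg, bb) j y') * RtoC (D * g)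
     + RtoC c * ee (sg, bb) j y' * (RtoC (D * g) - RtoC (D' * g'))
     + (RtoC c - RtoC c') * ee (sg, bb) j y' * RtoC (D' * g'))%C).
  { unfold Wt. simpl fst. fold L fy fy' c c'. fold D D' g g'. ring. }
  rewrite Dec.
  assert (Hw : w sg y j = E * D * g) by (unfold w; rewrite Hj; auto).
  assert (Hw' : w sg y' j = E' * D' * g') by (unfold w; rewrite Hj; auto).
  rewrite Hw, Hw'.
  eapply Rle_trans. apply Cmod_triangle. eapply Rle_trans. apply Rplus_le_compat_r. apply Cmod_triangle.
  rewrite !Cmod_mult, <- !RtoC_minus, !Cmod_R. replace (Cmod (ee (sg, bb) j y')) with E' by (rewrite ee_mod; reflexivity).
  rewrite (Rabs_pos_eq c) by lra. rewrite (Rabs_pos_eq (D * g)) by nra. rewrite (Rabs_pos_eq (D' * g')) by nra.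
  rewrite Hcc.
  assert (Hdg : Rabs (D * g - D' * g') <= D * (C0 * exp C0 * t) * g + D' * (Hf * (Ca * t))).
  { replace (D * g - D' * g') with ((D - D') * g + D' * (g - g')) by ring.
    eapply Rle_trans. apply Rabs_triang. rewrite !Rabs_mult, (Rabs_pos_eq g), (Rabs_pos_eq D') by lra.
    apply Rplus_le_compat. apply Rmult_le_compat_r; lra. apply Rmult_le_compat_l; lra. }
  assert (T1 : c * Cmod (ee (sg, bb) j y - ee (sg, bb) j y')%C * (D * g) <=
     E * D * g * ((4 * Ca * rb + 2 * C0 * exp C0) * t) * c).
  { apply Rle_trans with (c * (E * ((4 * Ca * rb + 2 * C0 * exp C0) * t)) * (D * g)).
    apply Rmult_le_compat_r. nra. apply Rmult_le_compat_l; lra. right; ring. }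
  assert (T2 : c * E' * Rabs (D * g - D' * g') <=
     E * D * g * (C0 * exp C0 * exp C0 * t) * c + E' * D' * g' * (Hf * Ca * t / mf) * c).
  { apply Rle_trans with (c * E' * (D * (C0 * exp C0 * t) * g + D' * (Hf * (Ca * t)))).
    apply Rmult_le_compat_l. nra. auto.
    assert (A1 : c * E' * (D * (C0 * exp C0 * t) * g) <= E * D * g * (C0 * exp C0 * exp C0 * t) * c).
    { apply Rle_trans with (c * (E * exp C0) * (D * (C0 * exp C0 * t) * g)).
      apply Rmult_le_compat_r. repeat apply Rmult_le_pos; lra.
      apply Rmult_le_compat_l; lra. right; ring. }
    assert (A2 : c * E' * (D' * (Hf * (Ca * t))) <= E' * D' * g' * (Hf * Ca * t / mf) * c).
    { assert (HH : 0 <= Hf * Ca * t) by (pose proof H0_nn; unfold Hf; repeat apply Rmult_le_pos; lra).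
      replace (E' * D' * g' * (Hf * Ca * t / mf) * c) with (c * E' * D' * (Hf * Ca * t) * (g' / mf)) by (field; lra).
      replace (c * E' * (D' * (Hf * (Ca * t)))) with (c * E' * D' * (Hf * Ca * t) * 1) by ring.
      apply Rmult_le_compat_l. assert (0 <= c * E' * D') by (repeat apply Rmult_le_pos; lra). nra.
      apply Rmult_le_reg_r with mf; auto. unfold Rdiv. rewrite Rmult_assoc, Rinv_l, Rmult_1_r; lra. }
    rewrite Rmult_plus_distr_l. lra. }
  unfold Rdiv in *. fold c.
  assert (E3: c * (Rabs (fy - fy') * / fy') * E' * (D' * g') = E' * D' * g' * (Rabs (fy - fy') * / fy') * c) by ring.
  assert (E4: E * D * g * ((4 * Ca * rb + 2 * C0 * exp C0 + C0 * exp C0 * exp C0) * t * c) = E * D * g * ((4 * Ca * rb + 2 * C0 * exp C0) * t) * c + E * D * g * (C0 * exp C0 * exp C0 * t) * c) by ring.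
  assert (E5: E' * D' * g' * ((Hf * Ca * t * / mf + Rabs (fy - fy') * / fy') * c) = E' * D' * g' * (Hf * Ca * t * / mf) * c + E' * D' * g' * (Rabs (fy - fy') * / fy') * c) by ring.
  lra.
Qed.

Definition Bc := 4 * Ca + 2 * C0 * exp C0 + C0 * exp C0 * exp C0 + Sf * Hf * Ca / (mf * mf) + Hf / mf.
Lemma Hf_nn : 0 <= Hf. Proof. pose proof H0_nn; unfold Hf; lra. Qed.

Lemma cdom_Lop s (phi : R -> C) M y : Rabs (fst s) < eps1 -> in01 y -> (forall x, in01 x -> Cmod (phi x) <= M) ->
  cdom (fun j => if I j then (Wt s j y * phi (h j y))%C else RtoC 0).
Proof.
  intros Hs Hy HM.
  pose proof (lam_b _ Hs). pose proof (f_pos _ y Hs Hy). pose proof (M_nn phi M HM).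
  set (c := / (lam (fst s) * f (fst s) y)).
  assert (Hc : 0 < c) by (apply Rinv_0_lt_compat, Rmult_lt_0_compat; lra).
  apply (cdom_w (fst s) y _ (c * M) Hs Hy).
  - intros j. destruct (I j) eqn:Ej.
    + rewrite Cmod_mult, Wt_mod by auto. unfold Rdiv. fold c. rewrite <- Rmult_assoc.
      apply Rmult_le_compat_l. apply Rmult_le_pos. apply w_nn; auto. lra. apply HM, h_in; auto.
    + rewrite Cmod_R, Rabs_R0. apply Rmult_le_pos. apply w_nn; auto. apply Rmult_le_pos; lra.
Qed.

Lemma Lop_hol s (phi : R -> C) M A y y' :
  Rabs (fst s) < eps1 -> Rabs (fst s) <= 1 -> in01 y -> in01 y' ->
  (forall x, in01 x -> Cmod (phi x) <= M) ->
  (forall j, I j = true -> Cmod (phi (h j y) - phi (h j y'))%C <= A) ->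
  Cmod (Lop I h r lam f s phi y - Lop I h r lam f s phi y')%C <=
    A + M * Bc * (1 + rpow (Rabs (snd s)) alpha) * rpow (Rabs (y - y')) alpha.
Proof.
  intros Hs Hs1 Hy Hy' HM HA.
  rewrite (Lop_eq s phi M y), (Lop_eq s phi M y') by auto.
  rewrite <- csum_minus by (apply (cdom_Lop s phi M); auto).
  set (sg := fst s). set (t := rpow (Rabs (y - y')) alpha). set (rb := rpow (Rabs (snd s)) alpha).
  set (L := lam sg). set (fy := f sg y). set (fy' := f sg y').
  set (P := (4 * Ca * rb + 2 * C0 * exp C0 + C0 * exp C0 * exp C0) * t / (L * fy)).
  set (Q := (Hf * Ca * t / mf + Rabs (fy - fy') / fy') / (L * fy)).
  set (c := / (L * fy)).
  assert (HL : 0 < L) by apply (lam_b sg Hs).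
  assert (Hfy : 0 < fy) by (apply f_pos; auto). assert (Hfy' : 0 < fy') by (apply f_pos; auto).
  assert (Hc : 0 < c) by (apply Rinv_0_lt_compat, Rmult_lt_0_compat; lra).
  pose proof (M_nn phi M HM) as HM0.
  eapply Rle_trans. apply (csum_bound _ (fun j => w sg y j * (c * A + M * P) + w sg y' j * (M * Q))).
  - intros j. destruct (I j) eqn:Ej.
    + replace (Wt s j y * phi (h j y) - Wt s j y' * phi (h j y'))%C with
        (Wt s j y * (phi (h j y) - phi (h j y')) + (Wt s j y - Wt s j y') * phi (h j y'))%C by ring.
      eapply Rle_trans. apply Cmod_triangle. rewrite !Cmod_mult.
      rewrite Wt_mod by auto. fold sg L fy. unfold Rdiv. fold c.
      pose proof (Wt_var s j y y' Hs Hs1 Hy Hy' Ej) as HW. fold sg rb t L fy fy' in HW. fold P Q in HW.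
      pose proof (HA j Ej). pose proof (HM (h j y') (proj1 (h_in j y' Ej Hy'))).
      pose proof (w_nn sg y j Hs Hy). pose proof (Cmod_ge_0 (Wt s j y - Wt s j y')).
      assert (w sg y j * c * Cmod (phi (h j y) - phi (h j y')) <= w sg y j * c * A).
      { apply Rmult_le_compat_l; auto. apply Rmult_le_pos; lra. }
      assert (Cmod (Wt s j y - Wt s j y') * Cmod (phi (h j y')) <= (w sg y j * P + w sg y' j * Q) * M).
      { apply Rmult_le_compat; auto. apply Cmod_ge_0. }
      nra.
    + unfold w. rewrite Ej. replace (RtoC 0 - RtoC 0)%C with (RtoC 0) by ring. rewrite Cmod_R, Rabs_R0. lra.
  - apply (ex_series_plus (fun j => w sg y j * (c * A + M * P)) (fun j => w sg y' j * (M * Q)));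
      apply ex_series_scal_r, w_ser; auto.
  - rewrite Series_plus by (apply ex_series_scal_r, w_ser; auto).
    rewrite !Series_scal_r, !w_sum by auto. fold L fy fy'.
    assert (E1 : L * fy * (c * A + M * P) = A + M * ((4 * Ca * rb + 2 * C0 * exp C0 + C0 * exp C0 * exp C0) * t)).
    { unfold c, P. field. lra. }
    assert (E2 : L * fy' * (M * Q) = M * (fy' * (Hf * Ca * t) / (mf * fy) + Rabs (fy - fy') / fy)).
    { unfold Q. field. pose proof mf_pos. repeat split; lra. }
    rewrite E1, E2.
    pose proof mf_pos as Hmf. pose proof Hf_nn. pose proof Ca_nn. assert (Ht : 0 <= t) by apply rpow_nonneg.
    assert (Hrb : 0 <= rb) by apply rpow_nonneg.
    assert (Hfm : mf <= fy) by (apply f_low; auto).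
    assert (Hfs : fy' <= Sf) by (apply f_up; auto).
    assert (Hd : Rabs (fy - fy') <= Hf * t) by (apply f_hol; auto).
    assert (T1 : fy' * (Hf * Ca * t) / (mf * fy) <= Sf * Hf * Ca / (mf * mf) * t).
    { assert (HHC : 0 <= Hf * Ca * t) by (apply Rmult_le_pos; [apply Rmult_le_pos|]; lra).
      apply Rle_trans with (Sf * (Hf * Ca * t) / (mf * mf)).
      unfold Rdiv. apply Rmult_le_compat. apply Rmult_le_pos; lra. left; apply Rinv_0_lt_compat, Rmult_lt_0_compat; lra.
      apply Rmult_le_compat_r; lra. apply Rinv_le_contravar. apply Rmult_lt_0_compat; lra. apply Rmult_le_compat; lra.
      right; field; lra. }
    assert (T2 : Rabs (fy - fy') / fy <= Hf / mf * t).
    { apply Rle_trans with (Hf * t / mf). unfold Rdiv. apply Rmult_le_compat; auto.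
      apply Rabs_pos. left; apply Rinv_0_lt_compat; lra. apply Rinv_le_contravar; lra.
      right; field; lra. }
    assert (HB : (4 * Ca * rb + 2 * C0 * exp C0 + C0 * exp C0 * exp C0) * t
       + (fy' * (Hf * Ca * t) / (mf * fy) + Rabs (fy - fy') / fy) <= Bc * (1 + rb) * t).
    { unfold Bc. pose proof C0_pos. pose proof (exp_pos C0).
      assert (0 <= Sf * Hf * Ca / (mf * mf)). { pose proof Sf_pos.
        assert (0 <= Sf * Hf * Ca) by (apply Rmult_le_pos; [apply Rmult_le_pos|]; lra).
        unfold Rdiv. apply Rmult_le_pos. auto. left; apply Rinv_0_lt_compat, Rmult_lt_0_compat; lra. }
      assert (0 <= Hf / mf) by (unfold Rdiv; apply Rmult_le_pos; [lra|left; apply Rinv_0_lt_compat; lra]).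
      assert (0 <= C0 * exp C0 * exp C0) by (repeat apply Rmult_le_pos; lra).
      assert (0 <= 2 * C0 * exp C0) by (repeat apply Rmult_le_pos; lra).
      set (K := 2 * C0 * exp C0 + C0 * exp C0 * exp C0 + Sf * Hf * Ca / (mf * mf) + Hf / mf).
      assert (0 <= K) by (unfold K; lra).
      replace ((4 * Ca + 2 * C0 * exp C0 + C0 * exp C0 * exp C0 + Sf * Hf * Ca / (mf * mf) + Hf / mf) * (1 + rb) * t)
        with ((4 * Ca * rb) * t + K * t + (4 * Ca + K * rb) * t) by (unfold K; ring).
      assert (0 <= K * rb) by (apply Rmult_le_pos; lra).
      assert (0 <= (4 * Ca + K * rb) * t) by (apply Rmult_le_pos; lra).
      unfold K in *. lra. }
    assert (M * ((4 * Ca * rb + 2 * C0 * exp C0 + C0 * exp C0 * exp C0) * t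
       + (fy' * (Hf * Ca * t) / (mf * fy) + Rabs (fy - fy') / fy)) <= M * (Bc * (1 + rb) * t))
      by (apply Rmult_le_compat_l; auto).
    lra.
Qed.

(* ---------- adapted metric ---------- *)
Definition dset x z := fun v => exists w, validw w /\ v = Rabs (branch h w x - branch h w z) / rho ^ length w.
Definition dd x z := real (Lub_Rbar (dset x z)).
Definition Cd := Rmax 1 C0.

Lemma dset_bound x z v : in01 x -> in01 z -> dset x z v -> v <= Cd * Rabs (x - z).
Proof.
  intros Hx Hz [w [Hw ->]]. pose proof rho_b. pose proof C0_pos. pose proof (Rabs_pos (x - z)).
  assert (Hc1 : 1 <= Cd) by apply Rmax_l. assert (Hc2 : C0 <= Cd) by apply Rmax_r.
  destruct w as [|i w].
  - simpl. unfold Rdiv. rewrite Rinv_1, Rmult_1_r. nra.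
  - set (n := length (i :: w)). assert (Hn : (1 <= n)%nat) by (unfold n; simpl; lia).
    assert (Hp : 0 < rho ^ n) by (apply pow_lt; lra).
    assert (Hl : Rabs (branch h (i :: w) x - branch h (i :: w) z) <= C0 * rho ^ n * Rabs (x - z)).
    { apply lip_U; auto. intros t Ht. dS. apply (Hbr n (i :: w) Hn eq_refl Hw t Ht). }
    apply Rle_trans with (C0 * rho ^ n * Rabs (x - z) / rho ^ n).
    unfold Rdiv; apply Rmult_le_compat_r; auto. left; apply Rinv_0_lt_compat; auto.
    replace (C0 * rho ^ n * Rabs (x - z) / rho ^ n) with (C0 * Rabs (x - z)) by (field; lra). nra.
Qed.
Lemma dd_ge x z : in01 x -> in01 z -> Rabs (x - z) <= dd x z.
Proof.
  intros Hx Hz. apply (le_lub _ (Cd * Rabs (x - z))). intros v Hv; apply dset_bound; auto.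
  exists nil. split. intros i []. simpl. unfold Rdiv. rewrite Rinv_1, Rmult_1_r. auto.
Qed.
Lemma dd_nn x z : in01 x -> in01 z -> 0 <= dd x z.
Proof. intros. pose proof (dd_ge x z H H1). pose proof (Rabs_pos (x - z)). lra. Qed.
Lemma dd_le x z : in01 x -> in01 z -> dd x z <= Cd * Rabs (x - z).
Proof.
  intros Hx Hz. apply lub_le. intros v Hv; apply dset_bound; auto.
  apply Rmult_le_pos. pose proof (Rmax_l 1 C0). unfold Cd; lra. apply Rabs_pos.
Qed.
Lemma dd_contr i x z : I i = true -> in01 x -> in01 z -> dd (h i x) (h i z) <= rho * dd x z.
Proof.
  intros Hi Hx Hz. pose proof rho_b. apply lub_le.
  - intros v [w [Hw ->]].
    assert (Hw' : validw (w ++ i :: nil)).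
    { intros k Hk. apply in_app_or in Hk. destruct Hk as [Hk|[<-|[]]]; auto. }
    assert (E : dset x z (Rabs (branch h (w ++ i :: nil) x - branch h (w ++ i :: nil) z) / rho ^ length (w ++ i :: nil))).
    { exists (w ++ i :: nil); auto. }
    pose proof (le_lub _ (Cd * Rabs (x - z)) _ (fun v Hv => dset_bound x z v Hx Hz Hv) E) as H1.
    fold (dd x z) in H1. rewrite !branch_app in H1. rewrite length_app in H1. simpl length in H1.
    rewrite Nat.add_comm in H1. simpl pow in H1.
    assert (Hp : 0 < rho ^ length w) by (apply pow_lt; lra).
    replace (Rabs (branch h w (h i x) - branch h w (h i z)) / rho ^ length w) with
      (rho * (Rabs (branch h w (h i x) - branch h w (h i z)) / (rho * rho ^ length w))) by (field; lra).
    apply Rmult_le_compat_l; lra.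
  - apply Rmult_le_pos. lra. apply dd_nn; auto.
Qed.

Definition rhoa := rpow rho alpha.
Lemma rhoa_b : 0 < rhoa < 1.
Proof.
  pose proof rho_b; pose proof alpha_b. unfold rhoa. rewrite rpow_pos_eq by lra. split. apply Rpower_pos.
  unfold Rpower. rewrite <- exp_0. apply exp_increasing.
  assert (ln rho < 0) by (rewrite <- ln_1; apply ln_increasing; lra). nra.
Qed.
Lemma Bc_nn : 0 <= Bc.
Proof.
  unfold Bc. pose proof mf_pos; pose proof Hf_nn; pose proof Ca_nn; pose proof Sf_pos; pose proof C0_pos; pose proof (exp_pos C0).
  assert (0 <= Sf * Hf * Ca) by (apply Rmult_le_pos; [apply Rmult_le_pos|]; lra).
  assert (0 <= Sf * Hf * Ca / (mf * mf)) by (unfold Rdiv; apply Rmult_le_pos; [lra|left; apply Rinv_0_lt_compat, Rmult_lt_0_compat; lra]).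
  assert (0 <= Hf / mf) by (unfold Rdiv; apply Rmult_le_pos; [lra|left; apply Rinv_0_lt_compat; lra]).
  assert (0 <= C0 * exp C0 * exp C0) by (apply Rmult_le_pos; [apply Rmult_le_pos|]; lra).
  assert (0 <= 2 * C0 * exp C0) by (apply Rmult_le_pos; [apply Rmult_le_pos|]; lra). lra.
Qed.

Lemma main_inv s psi M A0 :
  Rabs (fst s) < eps1 -> Rabs (fst s) <= 1 -> 0 <= A0 ->
  (forall x, in01 x -> Cmod (psi x) <= M) ->
  (forall j x z, I j = true -> in01 x -> in01 z -> Cmod (psi (h j x) - psi (h j z))%C <= A0 * rpow (dd x z) alpha) ->
  forall n,
  (forall x, in01 x -> Cmod (Lpow I h r lam f s n psi x) <= M) /\
  (forall j x z, I j = true -> in01 x -> in01 z ->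
     Cmod (Lpow I h r lam f s n psi (h j x) - Lpow I h r lam f s n psi (h j z))%C <=
     (A0 + M * Bc * (1 + rpow (Rabs (snd s)) alpha) / (1 - rhoa)) * rpow (dd x z) alpha).
Proof.
  intros Hs Hs1 HA0 HM Hh.
  set (K := M * Bc * (1 + rpow (Rabs (snd s)) alpha)).
  pose proof (M_nn psi M HM) as HM0. pose proof Bc_nn. pose proof rhoa_b.
  assert (HK : 0 <= K) by (unfold K; pose proof (rpow_nonneg (Rabs (snd s)) alpha); apply Rmult_le_pos; [apply Rmult_le_pos|]; lra).
  set (As := A0 + K / (1 - rhoa)).
  assert (HKs : 0 <= K / (1 - rhoa)) by (unfold Rdiv; apply Rmult_le_pos; [lra|left; apply Rinv_0_lt_compat; lra]).
  assert (Has : (As + K) * rhoa <= As).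
  { assert (E : As - (As + K) * rhoa = A0 * (1 - rhoa) + K * (1 - rhoa)) by (unfold As; field; lra).
    assert (0 <= A0 * (1 - rhoa)) by (apply Rmult_le_pos; lra).
    assert (0 <= K * (1 - rhoa)) by (apply Rmult_le_pos; lra). lra. }
  induction n as [|n [IH1 IH2]].
  - split; auto. intros j x z Hj Hx Hz. simpl. eapply Rle_trans. apply Hh; auto.
    apply Rmult_le_compat_r. apply rpow_nonneg. fold K. fold As. unfold As; lra.
  - split.
    + intros x Hx. simpl. apply Lop_sup; auto.
    + intros j x z Hj Hx Hz. simpl. fold K As.
      set (y := h j x). set (y' := h j z).
      assert (Hy : in01 y) by (apply h_in; auto). assert (Hy' : in01 y') by (apply h_in; auto).
      pose proof (Lop_hol s (Lpow I h r lam f s n psi) M (As * rpow (dd y y') alpha) y y' Hs Hs1 Hy Hy' IH1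
        (fun k Hk => IH2 k y y' Hk Hy Hy')) as HL. fold K in HL.
      assert (G1 : rpow (Rabs (y - y')) alpha <= rpow (dd y y') alpha).
      { apply rpow_mono. pose proof alpha_b; lra. split. apply Rabs_pos. apply dd_ge; auto. }
      assert (G2 : rpow (dd y y') alpha <= rhoa * rpow (dd x z) alpha).
      { unfold rhoa. rewrite <- rpow_mult. apply rpow_mono. pose proof alpha_b; lra.
        split. apply dd_nn; auto. apply dd_contr; auto. pose proof rho_b; lra. apply dd_nn; auto. }
      assert (G3 : 0 <= rpow (dd y y') alpha) by apply rpow_nonneg.
      assert (G4 : 0 <= rpow (dd x z) alpha) by apply rpow_nonneg.
      eapply Rle_trans. exact HL.
      apply Rle_trans with ((As + K) * rpow (dd y y') alpha).
      { assert (K * rpow (Rabs (y - y')) alpha <= K * rpow (dd y y') alpha) by (apply Rmult_le_compat_l; auto).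
        lra. }
      apply Rle_trans with ((As + K) * (rhoa * rpow (dd x z) alpha)).
      { apply Rmult_le_compat_l; auto. unfold As; lra. }
      rewrite <- Rmult_assoc. apply Rmult_le_compat_r; auto.
Qed.

Definition Cda := rpow Cd alpha.
Lemma Cd_ge1 : 1 <= Cd. Proof. apply Rmax_l. Qed.
Lemma Cda_ge1 : 1 <= Cda. Proof. apply rpow_ge1. pose proof alpha_b; lra. apply Cd_ge1. Qed.

Lemma final_m0 : exists eps K : R, 0 < eps < 1 /\ 1 < K /\
    forall (sigma bb : R) (n : nat) (psi : R -> C),
      Rabs sigma < eps -> (1 <= n)%nat ->
      in_Calpha I h alpha psi ->
      in_Calpha I h alpha (Lpow I h r lam f (sigma, bb) n psi) /\
      normb I h alpha bb (Lpow I h r lam f (sigma, bb) n psi)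
        <= K * normb I h alpha bb psi.
Proof.
  pose proof eps1_b as He. pose proof Bc_nn as HBc. pose proof rhoa_b as Hra. pose proof Cda_ge1 as HCda.
  assert (HBr : 0 <= Bc / (1 - rhoa)) by (unfold Rdiv; apply Rmult_le_pos; [lra|left; apply Rinv_0_lt_compat; lra]).
  exists (Rmin eps1 1 / 2), (1 + Cda * (1 + Bc / (1 - rhoa))).
  split. { pose proof (Rmin_l eps1 1); pose proof (Rmin_r eps1 1). split; [|lra].
    unfold Rmin; destruct (Rle_dec eps1 1); lra. }
  split. { assert (0 < Cda * (1 + Bc / (1 - rhoa))) by (apply Rmult_lt_0_compat; lra). lra. }
  intros sg bb n psi Hsg Hn [HB1 HB2].
  assert (Hs : Rabs (fst (sg, bb)) < eps1) by (simpl; pose proof (Rmin_l eps1 1); lra).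
  assert (Hs1 : Rabs (fst (sg, bb)) <= 1) by (simpl; pose proof (Rmin_r eps1 1); lra).
  set (M := sup_norm psi). set (hl := holder_loc I h alpha psi). set (A0 := Rmax 0 hl).
  assert (HM : forall x, in01 x -> Cmod (psi x) <= M).
  { intros x Hx. apply bounded_le; auto. exists x; auto. }
  pose proof (M_nn psi M HM) as HM0.
  assert (HA0 : 0 <= A0) by apply Rmax_l.
  assert (Hh : forall j x z, I j = true -> in01 x -> in01 z -> Cmod (psi (h j x) - psi (h j z))%C <= A0 * rpow (dd x z) alpha).
  { intros j x z Hj Hx Hz. destruct (Req_dec x z) as [->|Hxz].
    { replace (psi (h j z) - psi (h j z))%C with (RtoC 0) by ring. rewrite Cmod_R, Rabs_R0.
      apply Rmult_le_pos; auto. apply rpow_nonneg. }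
    assert (Hel : Cmod (psi (h j x) - psi (h j z))%C / Rpower (Rabs (x - z)) alpha <= hl).
    { apply bounded_le; auto. exists j, x, z. split; [auto|split; [auto|split; [auto|split; auto]]]. }
    pose proof (Rpower_pos (Rabs (x - z)) alpha) as Hp.
    apply Rle_trans with (A0 * Rpower (Rabs (x - z)) alpha).
    { apply Rmult_le_reg_r with (/ Rpower (Rabs (x - z)) alpha). apply Rinv_0_lt_compat; auto.
      rewrite Rmult_assoc, Rinv_r, Rmult_1_r by lra. pose proof (Rmax_r 0 hl). fold A0 in H. unfold Rdiv in Hel. lra. }
    apply Rmult_le_compat_l; auto. rewrite <- rpow_pos_eq by (apply Rabs_pos_lt; lra).
    apply rpow_mono. pose proof alpha_b; lra. split. apply Rabs_pos. apply dd_ge; auto. }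
  destruct (main_inv (sg, bb) psi M A0 Hs Hs1 HA0 HM Hh n) as [Hsup Hhol].
  simpl snd in Hhol.
  set (rb := rpow (Rabs bb) alpha). fold rb in Hhol. assert (Hrb : 0 <= rb) by apply rpow_nonneg.
  set (As := A0 + M * Bc * (1 + rb) / (1 - rhoa)). fold As in Hhol.
  assert (HAs : 0 <= As).
  { unfold As. assert (0 <= M * Bc * (1 + rb)) by (apply Rmult_le_pos; [apply Rmult_le_pos|]; lra).
    assert (0 <= M * Bc * (1 + rb) / (1 - rhoa)) by (unfold Rdiv; apply Rmult_le_pos; [lra|left; apply Rinv_0_lt_compat; lra]). lra. }
  set (Out := Lpow I h r lam f (sg, bb) n psi).
  fold Out in Hsup, Hhol.
  assert (Hel2 : forall v, holder_loc_set I h alpha Out v -> v <= As * Cda).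
  { intros v (j & x & z & Hj & Hx & Hz & Hxz & ->).
    pose proof (Rpower_pos (Rabs (x - z)) alpha) as Hp.
    apply Rmult_le_reg_r with (Rpower (Rabs (x - z)) alpha); auto.
    unfold Rdiv. rewrite Rmult_assoc, Rinv_l, Rmult_1_r by lra.
    eapply Rle_trans. apply Hhol; auto.
    assert (rpow (dd x z) alpha <= Cda * Rpower (Rabs (x - z)) alpha).
    { unfold Cda. rewrite <- rpow_pos_eq by (apply Rabs_pos_lt; lra).
      rewrite <- rpow_mult. apply rpow_mono. pose proof alpha_b; lra. split. apply dd_nn; auto. apply dd_le; auto.
      pose proof Cd_ge1; lra. apply Rabs_pos. }
    rewrite Rmult_assoc. apply Rmult_le_compat_l; auto. }
  assert (Hsup2 : forall v, sup_set Out v -> v <= M) by (intros v (x & Hx & ->); auto).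
  split. { split. exists M; auto. exists (As * Cda); auto. }
  assert (HS1 : sup_norm Out <= M) by (apply lub_le; auto).
  assert (HS2 : holder_loc I h alpha Out <= As * Cda) by (apply lub_le; auto; apply Rmult_le_pos; lra).
  unfold normb. fold M hl rb Out.
  set (N := Rmax M (hl / (1 + rb))).
  assert (HMN : M <= N) by apply Rmax_l. assert (HhN : hl / (1 + rb) <= N) by apply Rmax_r.
  assert (HA0N : A0 / (1 + rb) <= N).
  { unfold A0, Rmax at 1. destruct (Rle_dec 0 hl); auto. unfold Rdiv; rewrite Rmult_0_l; lra. }
  assert (Hdiv : As * Cda / (1 + rb) <= Cda * (N + N * (Bc / (1 - rhoa)))).
  { unfold As. replace ((A0 + M * Bc * (1 + rb) / (1 - rhoa)) * Cda / (1 + rb))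
      with (Cda * (A0 / (1 + rb) + M * (Bc / (1 - rhoa)))) by (field; lra).
    apply Rmult_le_compat_l. lra. apply Rplus_le_compat; auto. apply Rmult_le_compat_r; auto. }
  apply Rmax_lub.
  - assert (0 <= Cda * (1 + Bc / (1 - rhoa)) * N) by (apply Rmult_le_pos; [apply Rmult_le_pos|]; lra). nra.
  - apply Rle_trans with (As * Cda / (1 + rb)).
    { unfold Rdiv. apply Rmult_le_compat_r; auto. left; apply Rinv_0_lt_compat; lra. }
    eapply Rle_trans. exact Hdiv.
    replace (Cda * (N + N * (Bc / (1 - rhoa)))) with (Cda * (1 + Bc / (1 - rhoa)) * N) by ring. lra.
Qed.

End Main.

Theorem corollary6p6
  (alpha C0 rho eps0 : R) (I : nat -> bool) (a b : nat -> R)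
  (F : R -> R) (h : nat -> R -> R) (r : R -> R)
  (lam : R -> R) (f : R -> R -> R) (eps1 : R) :
  Setting alpha C0 rho eps0 I a b F h r ->
  EigenFamily alpha eps0 I h r lam f eps1 ->
  exists eps K : R, 0 < eps < 1 /\ 1 < K /\
    forall (sigma bb : R) (n : nat) (psi : R -> C),
      Rabs sigma < eps -> (1 <= n)%nat ->
      in_Calpha I h alpha psi ->
      in_Calpha I h alpha (Lpow I h r lam f (sigma, bb) n psi) /\
      normb I h alpha bb (Lpow I h r lam f (sigma, bb) n psi)
        <= K * normb I h alpha bb psi.
Proof.
  intros HS HE.
  destruct (f0_lower alpha C0 rho eps0 I a b F h r lam f eps1 HS HE) as [m0 [Hm Hmf]].
  eapply final_m0; eauto.
Qed.
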